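(* Let $[a,b]\subset\mathbb R$, $n,m,m_d\in\mathbb N$, and let $\mathcal J=\sum_{j=0}^{m}P_j\partial_z^j$ with constant matrices $P_j\in\mathbb R^{n\times n}$ satisfying $P_j=(-1)^{j+1}P_j^\top$ for $j\in[0:m]$. Let $\mathcal I=\{(i_1,j_1),\ldots,(i_l,j_l)\}\subset[1:n]\times[0:m_d]$ be a set of distinct index pairs ordered so that $j_1\le j_2\le\cdots\le j_l$, let $H:\mathbb R^l\to\mathbb R$ be smooth, and consider the Hamiltonian functional $\mathcal H(x)=\int_a^b H\big(\partial_z^{j_1}x_{i_1}(z),\ldots,\partial_z^{j_l}x_{i_l}(z)\big)\,\mathrm dz$ for sufficiently smooth $x:[a,b]\to\mathbb R^n$. Let $x$ be a (sufficiently smooth) solution of the Hamiltonian system $\frac{\mathrm d}{\mathrm dt}x=\mathcal J\,\delta_x\mathcal H(x)$, and define the extended state $\bar x=(\partial_z^{j_1}x_{i_1},\ldots,\partial_z^{j_l}x_{i_l})^\top$ and the lifted functional $\bar{\mathcal H}(\bar x)=\int_a^b H(\bar x_1(z),\ldots,\bar x_l(z))\,\mathrm dz$, in which $\bar x_1,\ldots,\bar x_l$ are regarded as independent functions. Then $\bar x$ satisfies the Hamiltonian system $$\frac{\mathrm d}{\mathrm dt}\bar x=\mathbb J\,\delta_{\bar x}\bar{\mathcal H}(\bar x),$$ where $\mathbb J$ is the $l\times l$ matrix differential operator with $(p,q)$-entry $\mathbb J_{pq}=\partial_z^{j_p}\,\mathcal J_{i_p i_q}\,(-\partial_z)^{j_q}$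 for $p,q\in[1:l]$ (equivalently $\mathbb J=D_+\,(\mathcal J_{i_pi_q})_{p,q=1}^l\,D_-$ with $D_\pm=\operatorname{diag}((\pm\partial_z)^{j_1},\ldots,(\pm\partial_z)^{j_l})$), and $\mathbb J$ is formally skew-adjoint.
   Context: For a matrix differential operator $\mathcal J=\sum_j P_j\partial_z^j$, $\mathcal J_{ik}$ denotes the scalar differential operator $\sum_j (P_j)_{ik}\partial_z^j$. The variational derivative $\delta_x\mathcal H(x)$ of a functional $\mathcal H$ is the function defined by $\frac{d}{d\varepsilon}\big|_{\varepsilon=0}\mathcal H(x+\varepsilon\eta)=\int_a^b\langle\delta_x\mathcal H(x)(z),\eta(z)\rangle_{\mathbb R^n}\,\mathrm dz$ for all $\eta\in H_0^{m_d}([a,b],\mathbb R^n)$. Since in $\bar{\mathcal H}$ the $\bar x_k$ are independent variables, $\delta_{\bar x}\bar{\mathcal H}(\bar x)=\big(\tfrac{\partial H}{\partial y_1}(\bar x),\ldots,\tfrac{\partial H}{\partial y_l}(\bar x)\big)^\top$. A matrix differential operator $\mathbb J$ is formally skew-adjoint if it equals minus its formal $L^2$-adjoint, i.e. $\int_a^b\langle e,\mathbb J f\rangle\,\mathrm dz=-\int_a^b\langle\mathbb J e,f\rangle\,\mathrm dz$ for all smooth compactly supported $e,f$. *)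

(* Defs.v *)
From Stdlib Require Import Reals List Lia Lra.
From Coquelicot Require Import Coquelicot.
Open Scope R_scope.

Fixpoint sumR (n : nat) (f : nat -> R) : R :=
  match n with O => 0 | S k => sumR k f + f k end.

(* iterated partial derivative: true = d/dt, false = d/dz; the head is applied last *)
Fixpoint pd2 (s : list bool) (f : R -> R -> R) : R -> R -> R :=
  match s with
  | nil => f
  | b :: s' => if b then (fun t z => Derive (fun t' => pd2 s' f t' z) t)
               else (fun t z => Derive (fun z' => pd2 s' f t z') z)
  end.

Definition cont2 (f : R -> R -> R) (t z : R) : Prop :=
  forall eps, 0 < eps -> exists delta, 0 < delta /\
    forall t' z', Rabs (t' - t) < delta -> Rabs (z' - z) < delta ->
      Rabs (f t' z' - f t z) < eps.

Definition smooth2 (f : R -> R -> R) : Prop :=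
  forall s t z, ex_derive (fun t' => pd2 s f t' z) t /\
                ex_derive (fun z' => pd2 s f t z') z /\ cont2 (pd2 s f) t z.

Definition smooth1 (f : R -> R) : Prop :=
  forall k z, ex_derive (Derive_n f k) z /\ continuous (Derive_n f k) z.

Definition upd (v : nat -> R) (p : nat) (y : R) : nat -> R :=
  fun q => if Nat.eqb q p then y else v q.

(* H only depends on the first l coordinates, i.e. H is a function on R^l *)
Definition depends_on_first (l : nat) (F : (nat -> R) -> R) : Prop :=
  forall v w, (forall p, (p < l)%nat -> v p = w p) -> F v = F w.

Fixpoint pdN (s : list nat) (F : (nat -> R) -> R) : (nat -> R) -> R :=
  match s with
  | nil => F
  | p :: s' => fun v => Derive (fun y => pdN s' F (upd v p y)) (v p)
  end.

Definition contN (l : nat) (F : (nat -> R) -> R) (v : nat -> R) : Prop :=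
  forall eps, 0 < eps -> exists delta, 0 < delta /\
    forall w, (forall p, (p < l)%nat -> Rabs (w p - v p) < delta) ->
      Rabs (F w - F v) < eps.

Definition smoothN (l : nat) (F : (nat -> R) -> R) : Prop :=
  forall (s : list nat) (v : nat -> R), List.Forall (fun p => (p < l)%nat) s ->
    (forall p, (p < l)%nat -> ex_derive (fun y => pdN s F (upd v p y)) (v p)) /\
    contN l (pdN s F) v.

Definition test_fun (a b : R) (eta : R -> R) : Prop :=
  smooth1 eta /\ exists c d, a < c /\ c <= d /\ d < b /\
    forall z, (z < c \/ d < z) -> eta z = 0.

Definition test_vec (N : nat) (a b : R) (eta : nat -> R -> R) : Prop :=
  forall i, (i < N)%nat -> test_fun a b (eta i).

Definition is_var_deriv (N : nat) (a b : R) (F : (nat -> R -> R) -> R)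
    (x g : nat -> R -> R) : Prop :=
  forall eta, test_vec N a b eta ->
    is_derive (fun eps => F (fun i z => x i z + eps * eta i z)) 0
      (RInt (fun z => sumR N (fun i => g i z * eta i z)) a b).

Definition ip (I : list (nat * nat)) (p : nat) : nat := fst (nth p I (0, 0)%nat).
Definition jp (I : list (nat * nat)) (p : nat) : nat := snd (nth p I (0, 0)%nat).

Definition Hfun (a b : R) (I : list (nat * nat)) (H : (nat -> R) -> R)
    (x : nat -> R -> R) : R :=
  RInt (fun z => H (fun p => Derive_n (x (ip I p)) (jp I p) z)) a b.

Definition Hbar (a b : R) (H : (nat -> R) -> R) (y : nat -> R -> R) : R :=
  RInt (fun z => H (fun p => y p z)) a b.

Definition xbar (I : list (nat * nat)) (x : nat -> R -> R -> R) (p : nat) (t z : R) : R :=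
  Derive_n (fun z' => x (ip I p) t z') (jp I p) z.

(* scalar operator J_{ik} = sum_{j=0}^m (P_j)_{ik} d_z^j, with P j i k = (P_j)_{ik} *)
Definition Jop (m : nat) (P : nat -> nat -> nat -> R) (i k : nat) (f : R -> R) : R -> R :=
  fun z => sumR (S m) (fun j => P j i k * Derive_n f j z).

Definition JJop (m : nat) (P : nat -> nat -> nat -> R) (I : list (nat * nat))
    (p q : nat) (f : R -> R) : R -> R :=
  Derive_n (Jop m P (ip I p) (ip I q) (fun w => (-1) ^ (jp I q) * Derive_n f (jp I q) w))
    (jp I p).

Definition JJvec (m : nat) (P : nat -> nat -> nat -> R) (I : list (nat * nat))
    (f : nat -> R -> R) (p : nat) (z : R) : R :=
  sumR (length I) (fun q => JJop m P I p q (f q) z).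

(* Main.v *)
Require Import Defs.
From Stdlib Require Import Reals List Lia Lra FunctionalExtensionality.
From Coquelicot Require Import Coquelicot.
Open Scope R_scope.

Lemma isd_const (c x : R) : is_derive (fun _ : R => c) x 0.
Proof. apply (is_derive_const (K:=R_AbsRing) (V:=R_NormedModule)). Qed.
Lemma isd_id (x : R) : is_derive (fun y : R => y) x 1.
Proof. apply (is_derive_id (K:=R_AbsRing)). Qed.
Lemma isd_plus (f g : R -> R) x df dg : is_derive f x df -> is_derive g x dg ->
  is_derive (fun y => f y + g y) x (df + dg).
Proof. intros; apply (is_derive_plus (K:=R_AbsRing) (V:=R_NormedModule)); auto. Qed.
Lemma isd_mult (f g : R -> R) x df dg : is_derive f x df -> is_derive g x dg ->
  is_derive (fun y => f y * g y) x (df * g x + f x * dg).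
Proof. intros; apply (is_derive_mult (K:=R_AbsRing)); auto. intros; apply Rmult_comm. Qed.
Lemma isd_comp (f g : R -> R) x df dg : is_derive f (g x) df -> is_derive g x dg ->
  is_derive (fun y => f (g y)) x (dg * df).
Proof. intros; apply (is_derive_comp (K:=R_AbsRing) (V:=R_NormedModule)); auto. Qed.
Lemma isd_scal (f : R -> R) x k df : is_derive f x df -> is_derive (fun y => k * f y) x (k * df).
Proof. apply is_derive_scal. Qed.
Lemma isd_opp (f : R -> R) x df : is_derive f x df -> is_derive (fun y => - f y) x (- df).
Proof. intros; apply (is_derive_opp (K:=R_AbsRing) (V:=R_NormedModule)); auto. Qed.
Lemma isd_inv (f : R -> R) x df : is_derive f x df -> f x <> 0 -> is_derive (fun y => / f y) x (- df / f x ^ 2).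
Proof. apply is_derive_inv. Qed.
Lemma isd_exp x : is_derive exp x (exp x).
Proof. apply is_derive_exp. Qed.
Lemma isd_ext_loc (f g : R -> R) x l : locally x (fun t => f t = g t) -> is_derive f x l -> is_derive g x l.
Proof. apply (is_derive_ext_loc (K:=R_AbsRing) (V:=R_NormedModule)). Qed.
Lemma isd_ext (f g : R -> R) x l : (forall t, f t = g t) -> is_derive f x l -> is_derive g x l.
Proof. apply (is_derive_ext (K:=R_AbsRing) (V:=R_NormedModule)). Qed.
Lemma isd_unique (f : R -> R) x l : is_derive f x l -> Derive f x = l.
Proof. apply is_derive_unique. Qed.
Lemma isd_correct (f : R -> R) x : ex_derive f x -> is_derive f x (Derive f x).
Proof. apply Derive_correct. Qed.
Lemma isd_ex (f : R -> R) x l : is_derive f x l -> ex_derive f x.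
Proof. intro H; exists l; exact H. Qed.

Lemma exd_cont (f : R -> R) z : ex_derive f z -> continuous f z.
Proof. intro H. apply (ex_derive_continuous (K:=R_AbsRing) (V:=R_NormedModule) f z H). Qed.

Definition Q1 (k : nat) (h : R -> R) :=
  forall z, ex_derive (Derive_n h k) z /\ continuous (Derive_n h k) z.
Definition Rk (k : nat) (h : R -> R) := forall j, (j <= k)%nat -> Q1 j h.

Lemma Derive_n_S_fun (f : R -> R) k : Derive_n f (S k) = Derive_n (Derive f) k.
Proof.
  apply functional_extensionality; intro z.
  rewrite <- Nat.add_1_r. rewrite <- (Derive_n_comp f k 1). reflexivity.
Qed.

Lemma Derive_n_comp_fun (f : R -> R) k j : Derive_n (Derive_n f j) k = Derive_n f (k + j).
Proof. apply functional_extensionality; intro z. apply Derive_n_comp. Qed.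

Lemma smooth1_Rk (h : R -> R)  : smooth1 h <-> forall k, Rk k h.
Proof.
  split.
  - intros H k j _ z. apply H.
  - intros H k z. apply (H k k (le_n k)).
Qed.

Lemma Rk_S (h : R -> R) k : (forall z, ex_derive h z) -> Rk k (Derive h) -> Rk (S k) h.
Proof.
  intros H1 H2 j Hj z. destruct j.
  - simpl. split; [apply H1| apply exd_cont, H1].
  - rewrite Derive_n_S_fun. apply H2. lia.
Qed.

Lemma Rk_S_inv (h : R -> R) k : Rk (S k) h -> (forall z, ex_derive h z) /\ Rk k (Derive h).
Proof.
  intros H. split.
  - intro z. apply (H 0%nat ltac:(lia) z).
  - intros j Hj z. rewrite <- Derive_n_S_fun. apply H. lia.
Qed.

Lemma Rk_le (h : R -> R) k k' : (k' <= k)%nat -> Rk k h -> Rk k' h.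
Proof. intros H1 H2 j Hj. apply H2. lia. Qed.

Lemma Rk_cont (h : R -> R) k : Rk k h -> forall z, continuous h z.
Proof. intros H z. apply (H 0%nat ltac:(lia) z). Qed.

Lemma Rk_0_ex (h : R -> R) k : Rk k h -> forall z, ex_derive h z.
Proof. intros H z. apply (H 0%nat ltac:(lia) z). Qed.

Lemma Rk_plus k : forall f g : R -> R, Rk k f -> Rk k g -> Rk k (fun z => f z + g z).
Proof.
  induction k; intros f g Hf Hg.
  - intros j Hj z. assert (j = 0%nat) by lia. subst. simpl. split.
    + apply (ex_derive_plus f g). apply (Hf 0%nat (le_n _)). apply (Hg 0%nat (le_n _)).
    + apply (continuous_plus f g). apply (Hf 0%nat (le_n _)). apply (Hg 0%nat (le_n _)).
  - destruct (Rk_S_inv _ _ Hf) as [Hf1 Hf2]. destruct (Rk_S_inv _ _ Hg) as [Hg1 Hg2].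
    apply Rk_S.
    + intro z. apply (ex_derive_plus f g); auto.
    + replace (Derive (fun z => f z + g z)) with (fun z => Derive f z + Derive g z).
      * apply IHk; auto.
      * apply functional_extensionality; intro z. rewrite Derive_plus; auto.
Qed.

Lemma Rk_mult k : forall f g : R -> R, Rk k f -> Rk k g -> Rk k (fun z => f z * g z).
Proof.
  induction k; intros f g Hf Hg.
  - intros j Hj z. assert (j = 0%nat) by lia. subst. simpl. split.
    + apply (ex_derive_mult f g). apply (Hf 0%nat (le_n _)). apply (Hg 0%nat (le_n _)).
    + apply (continuous_mult f g). apply (Hf 0%nat (le_n _)). apply (Hg 0%nat (le_n _)).
  - destruct (Rk_S_inv _ _ Hf) as [Hf1 Hf2]. destruct (Rk_S_inv _ _ Hg) as [Hg1 Hg2].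
    apply Rk_S.
    + intro z. apply (ex_derive_mult f g); auto.
    + replace (Derive (fun z => f z * g z)) with (fun z => Derive f z * g z + f z * Derive g z).
      * apply Rk_plus; apply IHk; auto; apply (Rk_le _ (S k)); auto.
      * apply functional_extensionality; intro z. rewrite Derive_mult; auto.
Qed.

Lemma Rk_const c k : Rk k (fun _ => c).
Proof.
  revert c; induction k; intro c.
  - intros j Hj z. assert (j = 0%nat) by lia. subst. simpl. split.
    apply ex_derive_const. apply continuous_const.
  - apply Rk_S. intro; apply ex_derive_const.
    replace (Derive (fun _ : R => c)) with (fun _ : R => 0). apply IHk.
    apply functional_extensionality; intro z. rewrite Derive_const. reflexivity.
Qed.

Lemma is_derive_aff c d z : is_derive (fun z => c * z + d) z c.
Proof. auto_derive; auto; ring. Qed.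

Lemma Rk_aff c d k : forall f : R -> R, Rk k f -> Rk k (fun z => f (c * z + d)).
Proof.
  induction k; intros f Hf.
  - intros j Hj z. assert (j = 0%nat) by lia. subst. simpl.
    assert (ex_derive (fun z => f (c * z + d)) z).
    { eexists. apply (is_derive_comp f (fun z => c * z + d)).
      apply Derive_correct. apply (Hf 0%nat (le_n _)).
      apply is_derive_aff. }
    split; auto. apply exd_cont; auto.
  - destruct (Rk_S_inv _ _ Hf) as [Hf1 Hf2].
    assert (HD: forall z, is_derive (fun z => f (c * z + d)) z (c * Derive f (c * z + d))).
    { intro z. evar (l : R). replace (c * Derive f (c * z + d)) with l.
      apply (is_derive_comp f (fun z => c * z + d)).
      apply Derive_correct. apply Hf1.
      apply is_derive_aff. unfold l. simpl. unfold scal; simpl. unfold mult; simpl. ring. }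
    apply Rk_S.
    + intro z. eexists; apply HD.
    + replace (Derive (fun z => f (c * z + d))) with (fun z => c * Derive f (c * z + d)).
      * apply Rk_mult. apply Rk_const. apply (IHk (Derive f)); auto.
      * apply functional_extensionality; intro z. symmetry. apply is_derive_unique. apply HD.
Qed.

Lemma smooth1_plus (f g : R -> R) : smooth1 f -> smooth1 g -> smooth1 (fun z => f z + g z).
Proof. rewrite !smooth1_Rk. intros; apply Rk_plus; auto. Qed.
Lemma smooth1_mult (f g : R -> R) : smooth1 f -> smooth1 g -> smooth1 (fun z => f z * g z).
Proof. rewrite !smooth1_Rk. intros; apply Rk_mult; auto. Qed.
Lemma smooth1_const c : smooth1 (fun _ => c).
Proof. rewrite !smooth1_Rk. intros; apply Rk_const; auto. Qed.
Lemma smooth1_aff c d (f : R -> R) : smooth1 f -> smooth1 (fun z => f (c * z + d)).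
Proof. rewrite !smooth1_Rk. intros; apply Rk_aff; auto. Qed.
Lemma smooth1_scal c (f : R -> R) : smooth1 f -> smooth1 (fun z => c * f z).
Proof. intros; apply (smooth1_mult (fun _ => c)); auto. apply smooth1_const. Qed.
Lemma smooth1_Derive_n (f : R -> R) j : smooth1 f -> smooth1 (Derive_n f j).
Proof. intros H k z. rewrite Derive_n_comp_fun. apply H. Qed.
Lemma smooth1_Derive (f : R -> R) : smooth1 f -> smooth1 (Derive f).
Proof. intros H. apply (smooth1_Derive_n f 1 H). Qed.
Lemma smooth1_ex (f : R -> R) : smooth1 f -> forall z, ex_derive f z.
Proof. intros H z. apply (H 0%nat z). Qed.
Lemma smooth1_cont (f : R -> R) : smooth1 f -> forall z, continuous f z.
Proof. intros H z. apply (H 0%nat z). Qed.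
Lemma smooth1_sumR N (F : nat -> R -> R) :
  (forall k, (k < N)%nat -> smooth1 (F k)) -> smooth1 (fun z => sumR N (fun k => F k z)).
Proof.
  induction N; intros H; simpl.
  - apply smooth1_const.
  - apply (smooth1_plus (fun z => sumR N (fun k => F k z))). apply IHN; intros; apply H; lia. apply H; lia.
Qed.

Lemma Derive_n_plus_s (f g : R -> R) j : smooth1 f -> smooth1 g ->
  Derive_n (fun z => f z + g z) j = (fun z => Derive_n f j z + Derive_n g j z).
Proof.
  intros Hf Hg. apply functional_extensionality; intro z.
  apply Derive_n_plus; apply filter_forall; intros y k Hk; destruct k; simpl; auto; [apply Hf|apply Hg].
Qed.

Lemma Derive_n_sumR N (F : nat -> R -> R) j :
  (forall k, (k < N)%nat -> smooth1 (F k)) ->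
  Derive_n (fun z => sumR N (fun k => F k z)) j = (fun z => sumR N (fun k => Derive_n (F k) j z)).
Proof.
  induction N; intros H; simpl.
  - apply functional_extensionality; intro z. destruct j. reflexivity. simpl. apply Derive_n_const.
  - rewrite (Derive_n_plus_s (fun z => sumR N (fun k => F k z))).
    rewrite IHN. reflexivity. intros; apply H; lia.
    apply smooth1_sumR; intros; apply H; lia. apply H; lia.
Qed.

Lemma Derive_n_scal_fun c (f : R -> R) j : Derive_n (fun z => c * f z) j = (fun z => c * Derive_n f j z).
Proof. apply functional_extensionality; intro z. apply Derive_n_scal_l. Qed.

Lemma exp_pow_n x n : exp x ^ n = exp (INR n * x).
Proof.
  induction n. simpl. rewrite Rmult_0_l, exp_0. reflexivity.
  rewrite S_INR. simpl pow. rewrite IHn. rewrite <- exp_plus. f_equal. ring.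
Qed.

Lemma exp_ge_1x x : 0 <= x -> 1 + x <= exp x.
Proof.
  intro H. destruct (Req_dec x 0). subst. rewrite exp_0. lra.
  left. apply exp_ineq1; auto.
Qed.

Lemma exp_poly_bound N u : 0 <= u ->
  (1 + u) ^ N * exp (- u) <= (INR N + 1) ^ (S N) / (1 + u).
Proof.
  intro Hu. set (K := INR N + 1).
  assert (HK : 1 <= K) by (unfold K; pose proof (pos_INR N); lra).
  assert (Hexp : ((1 + u) / K) ^ (S N) <= exp u).
  { replace (exp u) with (exp (u / K) ^ (S N)).
    apply pow_incr. split. apply Rdiv_le_0_compat; lra.
    apply Rle_trans with (1 + u / K). 2: apply exp_ge_1x; apply Rdiv_le_0_compat; lra.
    unfold Rdiv. rewrite Rmult_plus_distr_r. 
    assert (/ K <= 1). { rewrite <- Rinv_1. apply Rinv_le_contravar; lra. }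
    lra.
    rewrite exp_pow_n. f_equal. rewrite S_INR. fold K. field. lra. }
  unfold Rdiv in Hexp. rewrite Rpow_mult_distr, pow_inv in Hexp.
  assert (H1u : 0 < (1 + u) ^ N) by (apply pow_lt; lra).
  assert (HKN : 0 < K ^ S N) by (apply pow_lt; lra).
  rewrite exp_Ropp.
  apply Rle_trans with ((1 + u) ^ N / ((1 + u) ^ S N / K ^ S N)).
  - unfold Rdiv. apply Rmult_le_compat_l. lra. apply Rinv_le_contravar.
    apply Rmult_lt_0_compat; [apply pow_lt; lra | apply Rinv_0_lt_compat; lra]. exact Hexp.
  - right. replace ((1 + u) ^ S N) with ((1 + u) * (1 + u) ^ N) by (simpl; ring). field. repeat split; lra.
Qed.

Inductive ispoly : (R -> R) -> Prop :=
| ip_const c : ispoly (fun _ => c)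
| ip_id : ispoly (fun u => u)
| ip_plus p q : ispoly p -> ispoly q -> ispoly (fun u => p u + q u)
| ip_mult p q : ispoly p -> ispoly q -> ispoly (fun u => p u * q u).

Lemma poly_deriv p : ispoly p -> exists dp, ispoly dp /\ forall u, is_derive p u (dp u).
Proof.
  induction 1.
  - exists (fun _ => 0). split. constructor. intro; apply isd_const.
  - exists (fun _ => 1). split. constructor. intro; apply isd_id.
  - destruct IHispoly1 as [dp [Hdp1 Hdp2]]. destruct IHispoly2 as [dq [Hdq1 Hdq2]].
    exists (fun u => dp u + dq u). split. constructor; auto.
    intro u. apply (isd_plus p q); auto.
  - destruct IHispoly1 as [dp [Hdp1 Hdp2]]. destruct IHispoly2 as [dq [Hdq1 Hdq2]].
    exists (fun u => dp u * q u + p u * dq u). split. repeat constructor; auto.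
    intro u. apply (isd_mult p q); auto.
Qed.

Lemma poly_bound p : ispoly p -> exists C N, 0 <= C /\ forall u, 0 <= u -> Rabs (p u) <= C * (1 + u) ^ N.
Proof.
  induction 1.
  - exists (Rabs c), 0%nat. split. apply Rabs_pos. intros; simpl; lra.
  - exists 1, 1%nat. split. lra. intros. rewrite Rabs_pos_eq by lra. simpl. lra.
  - destruct IHispoly1 as [C1 [N1 [HC1 H1]]]. destruct IHispoly2 as [C2 [N2 [HC2 H2]]].
    exists (C1 + C2), (N1 + N2)%nat. split. lra. intros u Hu.
    assert (1 <= (1 + u) ^ N1) by (apply pow_R1_Rle; lra).
    assert (1 <= (1 + u) ^ N2) by (apply pow_R1_Rle; lra).
    rewrite pow_add. eapply Rle_trans. apply Rabs_triang.
    specialize (H1 u Hu). specialize (H2 u Hu).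
    apply Rle_trans with (C1 * ((1 + u) ^ N1 * (1 + u) ^ N2) + C2 * ((1 + u) ^ N1 * (1 + u) ^ N2)).
    2: right; ring.
    apply Rplus_le_compat.
    + eapply Rle_trans. apply H1. apply Rmult_le_compat_l. auto.
      rewrite <- (Rmult_1_r ((1 + u) ^ N1)) at 1. apply Rmult_le_compat_l; lra.
    + eapply Rle_trans. apply H2. apply Rmult_le_compat_l. auto.
      rewrite <- (Rmult_1_l ((1 + u) ^ N2)) at 1. apply Rmult_le_compat_r; lra.
  - destruct IHispoly1 as [C1 [N1 [HC1 H1]]]. destruct IHispoly2 as [C2 [N2 [HC2 H2]]].
    exists (C1 * C2), (N1 + N2)%nat. split. apply Rmult_le_pos; auto. intros u Hu.
    rewrite Rabs_mult, pow_add.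
    replace (C1 * C2 * ((1 + u) ^ N1 * (1 + u) ^ N2)) with ((C1 * (1 + u) ^ N1) * (C2 * (1 + u) ^ N2)) by ring.
    apply Rmult_le_compat; auto; apply Rabs_pos.
Qed.

Lemma poly_flat p : ispoly p -> forall eps, 0 < eps -> exists M, 0 < M /\
  forall u, M < u -> Rabs (p u * exp (- u)) < eps.
Proof.
  intros Hp eps Heps. destruct (poly_bound p Hp) as [C [N [HC Hb]]].
  set (K := (INR N + 1) ^ S N).
  assert (HK : 0 < K) by (apply pow_lt; pose proof (pos_INR N); lra).
  exists (C * K / eps + 1). split.
  { assert (0 <= C * K / eps) by (apply Rdiv_le_0_compat; [apply Rmult_le_pos|]; lra). lra. }
  intros u Hu.
  assert (0 <= C * K / eps) by (apply Rdiv_le_0_compat; [apply Rmult_le_pos|]; lra).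
  assert (Hu0 : 0 <= u) by lra.
  rewrite Rabs_mult, (Rabs_pos_eq (exp _)) by (left; apply exp_pos).
  apply Rle_lt_trans with (C * ((1 + u) ^ N * exp (- u))).
  { rewrite <- Rmult_assoc. apply Rmult_le_compat_r. left; apply exp_pos. apply Hb; auto. }
  apply Rle_lt_trans with (C * (K / (1 + u))).
  { apply Rmult_le_compat_l; auto. apply exp_poly_bound; auto. }
  replace (C * (K / (1 + u))) with ((C * K / eps) * eps / (1 + u)) by (field; lra).
  apply Rlt_le_trans with ((1 + u) * eps / (1 + u)).
  { unfold Rdiv. apply Rmult_lt_compat_r. apply Rinv_0_lt_compat; lra.
    apply Rmult_lt_compat_r; lra. }
  right. field. lra.
Qed.

Definition phi (r : R -> R) (x : R) : R :=
  if Rlt_dec 0 x then r (/ x) * exp (- / x) else 0.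

Lemma phi_deriv r : ispoly r -> exists r2, ispoly r2 /\ forall x, is_derive (phi r) x (phi r2 x).
Proof.
  intro Hr. destruct (poly_deriv r Hr) as [dr [Hdr1 Hdr2]].
  exists (fun u => u * u * (r u - dr u)). split.
  { assert (ispoly (fun u => - dr u)).
    { replace (fun u => - dr u) with (fun u => (-1) * dr u) by (apply functional_extensionality; intro; ring).
      apply (ip_mult (fun _ => -1) dr); [constructor|auto]. }
    apply (ip_mult (fun u => u * u) (fun u => r u - dr u)).
    apply (ip_mult (fun u => u) (fun u => u)); constructor.
    apply (ip_plus r (fun u => - dr u)); auto. }
  intro x. destruct (Rlt_dec 0 x) as [Hx | Hx].
  -
    apply isd_ext_loc with (fun x => r (/ x) * exp (- / x)).
    { apply (locally_interval _ x 0 p_infty); simpl; auto. intros y Hy _.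
      unfold phi. destruct (Rlt_dec 0 y); [reflexivity | lra]. }
    unfold phi. destruct (Rlt_dec 0 x) as [_|]; [|lra].
    evar (l : R). replace (/ x * / x * (r (/ x) - dr (/ x)) * exp (- / x)) with l.
    apply (isd_mult (fun x => r (/ x)) (fun x => exp (- / x))).
    apply (isd_comp r (fun x => / x)). apply Hdr2.
    apply (isd_inv (fun x => x)). apply isd_id. lra.
    apply (isd_comp exp (fun x => - / x)). apply isd_exp.
    apply (isd_opp (fun x => / x)). apply (isd_inv (fun x => x)). apply isd_id. lra.
    unfold l. field. lra.
  - destruct (Rle_lt_or_eq_dec x 0 ltac:(lra)) as [Hx' | Hx'].
    + apply isd_ext_loc with (fun _ => 0).
      { apply (locally_interval _ x m_infty 0); simpl; auto. intros y _ Hy.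
        unfold phi. destruct (Rlt_dec 0 y); [lra | reflexivity]. }
      unfold phi. destruct (Rlt_dec 0 x); [lra|]. apply isd_const.
    + subst x. unfold phi at 2. destruct (Rlt_dec 0 0); [lra|].
      apply is_derive_Reals. intros eps Heps.
      destruct (poly_flat (fun u => u * r u) ltac:(repeat constructor; auto) eps Heps) as [M [HM HM2]].
      assert (HM' : 0 < / M) by (apply Rinv_0_lt_compat; auto).
      exists (mkposreal _ HM'). intros h Hh Hhd. simpl in Hhd.
      unfold phi. rewrite Rplus_0_l. destruct (Rlt_dec 0 0); [lra|].
      destruct (Rlt_dec 0 h) as [Hh0|Hh0].
      * replace ((r (/ h) * exp (- / h) - 0) / h - 0) with (/ h * r (/ h) * exp (- / h)) by (field; lra).
        apply HM2. rewrite Rabs_pos_eq in Hhd by lra.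
        replace M with (/ / M) by (field; lra). apply Rinv_lt_contravar; auto.
        apply Rmult_lt_0_compat; auto.
      * replace ((0 - 0) / h - 0) with 0 by (field; auto). rewrite Rabs_R0; auto.
Qed.

Lemma phi_Rk k : forall r, ispoly r -> Rk k (phi r).
Proof.
  induction k; intros r Hr; destruct (phi_deriv r Hr) as [r2 [Hr2 Hd]].
  - intros j Hj z. assert (j = 0%nat) by lia. subst. simpl. split.
    eexists; apply Hd. apply exd_cont. eexists; apply Hd.
  - apply Rk_S. intro z; eexists; apply Hd.
    replace (Derive (phi r)) with (phi r2). apply IHk; auto.
    apply functional_extensionality; intro z. symmetry. apply isd_unique. apply Hd.
Qed.

Lemma phi_smooth r : ispoly r -> smooth1 (phi r).
Proof. intro Hr. apply smooth1_Rk. intro k. apply phi_Rk; auto. Qed.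

Definition bump (c d z : R) : R := phi (fun _ => 1) (z - c) * phi (fun _ => 1) (d - z).

Lemma bump_smooth c d : smooth1 (bump c d).
Proof.
  replace (bump c d) with (fun z => phi (fun _ => 1) (1 * z + - c) * phi (fun _ => 1) (-1 * z + d)).
  apply smooth1_mult; apply smooth1_aff; apply phi_smooth; constructor.
  apply functional_extensionality; intro z. unfold bump. f_equal; f_equal; ring.
Qed.

Lemma bump_pos c d z : c < z < d -> 0 < bump c d z.
Proof.
  intro H. unfold bump, phi. destruct (Rlt_dec 0 (z - c)); [|lra]. destruct (Rlt_dec 0 (d - z)); [|lra].
  apply Rmult_lt_0_compat; rewrite Rmult_1_l; apply exp_pos.
Qed.

Lemma bump_nonneg c d z : 0 <= bump c d z.
Proof.
  unfold bump, phi. destruct (Rlt_dec 0 (z - c)); destruct (Rlt_dec 0 (d - z));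
  try (rewrite Rmult_0_l || rewrite Rmult_0_r); try lra.
  apply Rmult_le_pos; rewrite Rmult_1_l; left; apply exp_pos.
Qed.

Lemma bump_zero c d z : z <= c \/ d <= z -> bump c d z = 0.
Proof.
  intro H. unfold bump, phi. destruct (Rlt_dec 0 (z - c)); destruct (Rlt_dec 0 (d - z)); try ring. lra.
Qed.

Lemma cont_eps (f : R -> R) z : continuous f z ->
  forall eps, 0 < eps -> exists delta, 0 < delta /\ forall y, Rabs (y - z) < delta -> Rabs (f y - f z) < eps.
Proof.
  intros H eps Heps. apply continuity_pt_filterlim in H.
  destruct (H eps Heps) as [alp [Halp H2]]. exists alp. split; auto.
  intros y Hy. destruct (Req_dec y z). subst. rewrite Rminus_eq_0, Rabs_R0. auto.
  apply (H2 y). split. split. exact I. auto. exact Hy.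
Qed.

Lemma eps_cont (f : R -> R) z :
  (forall eps, 0 < eps -> exists delta, 0 < delta /\ forall y, Rabs (y - z) < delta -> Rabs (f y - f z) < eps) ->
  continuous f z.
Proof.
  intros H. apply continuity_pt_filterlim. intros eps Heps.
  destruct (H eps Heps) as [d [Hd H2]]. exists d. split; auto.
  intros y [_ Hy]. apply H2. exact Hy.
Qed.

Lemma cont_mult (f g : R -> R) z : continuous f z -> continuous g z -> continuous (fun y => f y * g y) z.
Proof. apply (continuous_mult f g). Qed.
Lemma cont_plus (f g : R -> R) z : continuous f z -> continuous g z -> continuous (fun y => f y + g y) z.
Proof. apply (continuous_plus f g). Qed.
Lemma cont_const (c z : R) : continuous (fun _ : R => c) z.
Proof. apply continuous_const. Qed.

Lemma exRInt_cont (f : R -> R) a b : (forall z, continuous f z) -> ex_RInt f a b.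
Proof. intros H. apply (ex_RInt_continuous (V:=R_CompleteNormedModule)). intros; apply H. Qed.

Lemma RInt_pos (f : R -> R) a b z0 : a < b -> (forall z, continuous f z) ->
  (forall z, a <= z <= b -> 0 <= f z) -> a < z0 < b -> 0 < f z0 -> 0 < RInt f a b.
Proof.
  intros Hab Hc Hnn Hz0 Hf0.
  destruct (cont_eps f z0 (Hc z0) (f z0 / 2) ltac:(lra)) as [dl [Hdl Hd]].
  set (c := Rmax a (z0 - dl / 2)). set (d := Rmin b (z0 + dl / 2)).
  assert (Hc1 : a <= c) by (unfold c; apply Rmax_l).
  assert (Hc2 : c < z0) by (unfold c; apply Rmax_lub_lt; lra).
  assert (Hd1 : d <= b) by (unfold d; apply Rmin_l).
  assert (Hd2 : z0 < d) by (unfold d; apply Rmin_glb_lt; lra).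
  assert (Hcz : z0 - dl / 2 <= c) by (unfold c; apply Rmax_r).
  assert (Hdz : d <= z0 + dl / 2) by (unfold d; apply Rmin_r).
  assert (Hex : forall u v, ex_RInt f u v) by (intros; apply exRInt_cont; auto).
  rewrite <- (RInt_Chasles f a c b) by auto.
  rewrite <- (RInt_Chasles f c d b) by auto.
  unfold plus; simpl.
  assert (0 <= RInt f a c). { apply RInt_ge_0; auto. intros; apply Hnn; lra. }
  assert (0 <= RInt f d b). { apply RInt_ge_0; auto. intros; apply Hnn; lra. }
  assert (f z0 / 2 * (d - c) <= RInt f c d).
  { apply Rle_trans with (RInt (fun _ => f z0 / 2) c d).
    rewrite RInt_const. unfold scal; simpl. unfold mult; simpl. right; ring.
    apply RInt_le; auto. lra. apply ex_RInt_const.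
    intros x Hx. assert (Rabs (x - z0) < dl) by (apply Rabs_def1; lra).
    specialize (Hd x H1). apply Rabs_def2 in Hd. lra. }
  assert (0 < f z0 / 2 * (d - c)) by (apply Rmult_lt_0_compat; lra).
  lra.
Qed.

Lemma fundamental (h : R -> R) a b : a < b -> (forall z, continuous h z) ->
  (forall eta, test_fun a b eta -> RInt (fun z => h z * eta z) a b = 0) ->
  forall z, a < z < b -> h z = 0.
Proof.
  intros Hab Hc Hint z0 Hz0. destruct (Req_dec (h z0) 0) as [|Hne]; auto. exfalso.
  set (s := h z0).
  assert (Hs : 0 < Rabs s) by (apply Rabs_pos_lt; auto).
  destruct (cont_eps h z0 (Hc z0) (Rabs s / 2) ltac:(lra)) as [dl [Hdl Hd]].
  set (c := Rmax (z0 - dl / 2) ((a + z0) / 2)). set (d := Rmin (z0 + dl / 2) ((z0 + b) / 2)).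
  assert (Hc1 : a < c) by (unfold c; apply Rlt_le_trans with ((a + z0) / 2); [lra| apply Rmax_r]).
  assert (Hc2 : c < z0) by (unfold c; apply Rmax_lub_lt; lra).
  assert (Hd1 : d < b) by (unfold d; apply Rle_lt_trans with ((z0 + b) / 2); [apply Rmin_r|lra]).
  assert (Hd2 : z0 < d) by (unfold d; apply Rmin_glb_lt; lra).
  assert (Hcz : z0 - dl / 2 <= c) by (unfold c; apply Rmax_l).
  assert (Hdz : d <= z0 + dl / 2) by (unfold d; apply Rmin_l).
  assert (Htest : test_fun a b (bump c d)).
  { split. apply bump_smooth. exists c, d. repeat split; try lra.
    intros z Hz. apply bump_zero. lra. }
  specialize (Hint _ Htest).
  assert (Hpos : 0 < RInt (fun z => s * (h z * bump c d z)) a b).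
  { apply (RInt_pos _ a b z0); auto.
    - intro z. apply cont_mult. apply cont_const. apply cont_mult; auto. apply smooth1_cont, bump_smooth.
    - intros z Hz. destruct (Rlt_dec c z); destruct (Rlt_dec z d).
      + assert (Rabs (z - z0) < dl) by (apply Rabs_def1; lra).
        specialize (Hd z H). rewrite <- Rmult_assoc. apply Rmult_le_pos. 2: apply bump_nonneg.
        fold s in Hd. destruct (Rle_dec 0 s).
        * rewrite (Rabs_pos_eq s) in Hd by auto. apply Rabs_def2 in Hd. apply Rmult_le_pos; lra.
        * rewrite (Rabs_left s) in Hd by lra. apply Rabs_def2 in Hd.
          replace (s * h z) with ((- s) * (- h z)) by ring. apply Rmult_le_pos; lra.
      + rewrite bump_zero by lra. lra.
      + rewrite bump_zero by lra. lra.
      + rewrite bump_zero by lra. lra.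
    - rewrite <- Rmult_assoc. apply Rmult_lt_0_compat. fold s.
      replace (s * s) with (Rabs s * Rabs s). apply Rmult_lt_0_compat; auto.
      rewrite <- Rabs_mult. apply Rabs_pos_eq. apply Rle_0_sqr.
      apply bump_pos; lra. }
  rewrite (RInt_scal (V:=R_CompleteNormedModule) (fun z => h z * bump c d z)) in Hpos.
  rewrite Hint in Hpos. unfold scal in Hpos; simpl in Hpos. unfold mult in Hpos; simpl in Hpos. lra.
  apply exRInt_cont. intro z. apply cont_mult; auto. apply smooth1_cont, bump_smooth.
Qed.

Lemma cont_closed (F G : R -> R) a b : a < b -> (forall z, continuous F z) -> (forall z, continuous G z) ->
  (forall z, a < z < b -> F z = G z) -> forall z, a <= z <= b -> F z = G z.
Proof.
  intros Hab HF HG Heq z Hz.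
  destruct (Req_dec (F z - G z) 0) as [|Hne]; [lra|]. exfalso.
  assert (Hc : continuous (fun y => F y + (-1) * G y) z).
  { apply cont_plus; auto. apply cont_mult; auto. apply cont_const. }
  assert (Hp : 0 < Rabs (F z - G z)) by (apply Rabs_pos_lt; auto).
  destruct (cont_eps _ z Hc (Rabs (F z - G z)) Hp) as [dl [Hdl Hd]].
  set (e := Rmin (dl / 2) ((b - a) / 4)).
  assert (He : 0 < e) by (unfold e; apply Rmin_glb_lt; lra).
  assert (He1 : e <= dl / 2) by apply Rmin_l. assert (He2 : e <= (b - a) / 4) by apply Rmin_r.
  destruct (Rle_dec z ((a + b) / 2)).
  - assert (Hy : a < z + e < b) by lra.
    specialize (Hd (z + e) ltac:(rewrite Rabs_pos_eq; lra)).
    rewrite (Heq (z + e) Hy) in Hd.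
    replace (G (z + e) + -1 * G (z + e) - (F z + -1 * G z)) with (- (F z - G z)) in Hd by ring.
    rewrite Rabs_Ropp in Hd. lra.
  - assert (Hy : a < z - e < b) by lra.
    specialize (Hd (z - e) ltac:(rewrite Rabs_left; lra)).
    rewrite (Heq (z - e) Hy) in Hd.
    replace (G (z - e) + -1 * G (z - e) - (F z + -1 * G z)) with (- (F z - G z)) in Hd by ring.
    rewrite Rabs_Ropp in Hd. lra.
Qed.

Lemma deriv_eq_on (F G : R -> R) a b z dF dG : a < b -> a <= z <= b ->
  is_derive F z dF -> is_derive G z dG -> (forall y, a <= y <= b -> F y = G y) -> dF = dG.
Proof.
  intros Hab Hz HF HG Heq.
  destruct (Req_dec dF dG) as [|Hne]; auto. exfalso.
  assert (Hp : 0 < Rabs (dF - dG) / 2) by (apply Rdiv_lt_0_compat; [apply Rabs_pos_lt; lra| lra]).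
  apply is_derive_Reals in HF. apply is_derive_Reals in HG.
  destruct (HF _ Hp) as [d1 Hd1]. destruct (HG _ Hp) as [d2 Hd2].
  set (e := Rmin (Rmin d1 d2) (b - a) / 2).
  assert (He : 0 < e). { unfold e. apply Rdiv_lt_0_compat; [|lra]. apply Rmin_glb_lt; [apply Rmin_glb_lt; apply cond_pos|lra]. }
  assert (He1 : e < d1). { unfold e. apply Rle_lt_trans with (Rmin d1 d2 / 2). apply Rmult_le_compat_r. lra. apply Rmin_l.
     pose proof (Rmin_l d1 d2). pose proof (cond_pos d2). pose proof (cond_pos d1). assert (0 < Rmin d1 d2) by (apply Rmin_glb_lt; auto). lra. }
  assert (He2 : e < d2). { unfold e. apply Rle_lt_trans with (Rmin d1 d2 / 2). apply Rmult_le_compat_r. lra. apply Rmin_l.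
     pose proof (Rmin_r d1 d2). pose proof (cond_pos d2). pose proof (cond_pos d1). assert (0 < Rmin d1 d2) by (apply Rmin_glb_lt; auto). lra. }
  assert (He3 : e <= (b - a) / 2). { unfold e. apply Rmult_le_compat_r. lra. apply Rmin_r. }
  assert (Hfin : forall h, h <> 0 -> Rabs h < e -> a <= z + h <= b -> False).
  { intros h Hh0 Hh Hzh.
    specialize (Hd1 h Hh0 ltac:(lra)). specialize (Hd2 h Hh0 ltac:(lra)).
    rewrite (Heq (z + h) Hzh), (Heq z Hz) in Hd1.
    assert (Rabs (dF - dG) <= Rabs ((G (z + h) - G z) / h - dF) + Rabs ((G (z + h) - G z) / h - dG)).
    { replace (dF - dG) with (- ((G (z + h) - G z) / h - dF) + ((G (z + h) - G z) / h - dG)) by ring.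
      eapply Rle_trans. apply Rabs_triang. rewrite Rabs_Ropp. lra. }
    lra. }
  destruct (Rle_dec z ((a + b) / 2)).
  - apply (Hfin (e / 2)). lra. rewrite Rabs_pos_eq; lra. lra.
  - apply (Hfin (- (e / 2))). lra. rewrite Rabs_Ropp, Rabs_pos_eq; lra. lra.
Qed.

Lemma Derive_n_eq_on (F G : R -> R) a b : a < b -> smooth1 F -> smooth1 G ->
  (forall y, a <= y <= b -> F y = G y) -> forall k z, a <= z <= b -> Derive_n F k z = Derive_n G k z.
Proof.
  intros Hab HF HG Heq k. induction k; intros z Hz. simpl; auto.
  simpl. apply (deriv_eq_on (Derive_n F k) (Derive_n G k) a b z); auto.
  apply isd_correct, HF. apply isd_correct, HG.
Qed.

Lemma test_zero_out a b eta : test_fun a b eta -> exists c d, a < c /\ c <= d /\ d < b /\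
  forall j z, (z < c \/ d < z) -> Derive_n eta j z = 0.
Proof.
  intros [Hs [c [d [H1 [H2 [H3 H4]]]]]]. exists c, d. repeat split; auto.
  intros j z Hz. destruct j. simpl. auto.
  assert (Hl : locally z (fun t => eta t = (fun _ => 0) t)).
  { destruct Hz as [Hz|Hz].
    - apply (locally_interval (fun t => eta t = 0) z m_infty c); [exact I | exact Hz | intros y Hy1 Hy2; apply H4; simpl in *; lra].
    - apply (locally_interval (fun t => eta t = 0) z d p_infty); [exact Hz | exact I | intros y Hy1 Hy2; apply H4; simpl in *; lra]. }
  rewrite (Derive_n_ext_loc eta (fun _ => 0) (S j) z Hl). apply Derive_n_const.
Qed.

Lemma parts1 (f g : R -> R) a b : smooth1 f -> smooth1 g ->
  RInt (fun z => f z * Derive g z) a b = f b * g b - f a * g a - RInt (fun z => Derive f z * g z) a b.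
Proof.
  intros Hf Hg.
  assert (Hfg : smooth1 (fun z => f z * g z)) by (apply smooth1_mult; auto).
  assert (E : RInt (Derive (fun z => f z * g z)) a b = f b * g b - f a * g a).
  { apply (RInt_Derive (fun z => f z * g z)). intros; apply smooth1_ex; auto. intros; apply smooth1_cont. apply smooth1_Derive; auto. }
  replace (Derive (fun z => f z * g z)) with (fun z => Derive f z * g z + f z * Derive g z) in E.
  rewrite (RInt_plus (V:=R_CompleteNormedModule) (fun z => Derive f z * g z) (fun z => f z * Derive g z)) in E.
  unfold plus in E; simpl in E. lra.
  apply exRInt_cont; intro; apply smooth1_cont, smooth1_mult; auto; apply smooth1_Derive; auto.
  apply exRInt_cont; intro; apply smooth1_cont, smooth1_mult; auto; apply smooth1_Derive; auto.
  apply functional_extensionality; intro z. rewrite Derive_mult; auto; apply smooth1_ex; auto.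
Qed.

Lemma parts a b eta : a < b -> test_fun a b eta -> forall j (f : R -> R), smooth1 f ->
  RInt (fun z => f z * Derive_n eta j z) a b = (-1) ^ j * RInt (fun z => Derive_n f j z * eta z) a b.
Proof.
  intros Hab Heta. destruct (test_zero_out a b eta Heta) as [c [d [H1 [H2 [H3 H4]]]]].
  assert (Hs : smooth1 eta) by apply Heta.
  induction j; intros f Hf.
  - simpl. symmetry. apply Rmult_1_l.
  - change (Derive_n eta (S j)) with (Derive (Derive_n eta j)).
    rewrite parts1; auto. 2: apply smooth1_Derive_n; auto.
    rewrite (H4 j b) by lra. rewrite (H4 j a) by lra.
    rewrite IHj by (apply smooth1_Derive; auto).
    rewrite <- Derive_n_S_fun. simpl. ring.
Qed.

Definition Gp (G : (nat -> R) -> R) (p : nat) (w : nat -> R) : R :=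
  Derive (fun y => G (upd w p y)) (w p).

Lemma upd_upd v p y0 y : upd (upd v p y0) p y = upd v p y.
Proof. apply functional_extensionality; intro q. unfold upd. destruct (Nat.eqb q p); auto. Qed.
Lemma upd_same v p y : upd v p y p = y.
Proof. unfold upd. rewrite Nat.eqb_refl. auto. Qed.
Lemma upd_self v p : upd v p (v p) = v.
Proof. apply functional_extensionality; intro q. unfold upd. destruct (Nat.eqb q p) eqn:E; auto.
  apply Nat.eqb_eq in E; subst; auto. Qed.
Lemma upd_other v p y q : q <> p -> upd v p y q = v q.
Proof. intro H. unfold upd. destruct (Nat.eqb q p) eqn:E; auto. apply Nat.eqb_eq in E; lia. Qed.

Definition goodG (l : nat) (G : (nat -> R) -> R) : Prop :=
  depends_on_first l G /\
  (forall v p, (p < l)%nat -> ex_derive (fun y => G (upd v p y)) (v p)) /\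
  (forall p v, (p < l)%nat -> contN l (Gp G p) v).

Lemma goodG_ex l G v p y0 : goodG l G -> (p < l)%nat -> ex_derive (fun y => G (upd v p y)) y0.
Proof.
  intros [_ [H _]] Hp. specialize (H (upd v p y0) p Hp). rewrite upd_same in H.
  assert (E: (fun y => G (upd (upd v p y0) p y)) = (fun y => G (upd v p y)))
    by (apply functional_extensionality; intro; rewrite upd_upd; auto).
  eapply (ex_derive_ext (K:=R_AbsRing) (V:=R_NormedModule)); [|exact H]. intro t; simpl. rewrite upd_upd; auto.
Qed.

Lemma goodG_D (G : (nat -> R) -> R) v p y0 : Derive (fun y => G (upd v p y)) y0 = Gp G p (upd v p y0).
Proof. unfold Gp. rewrite upd_same.
  assert (E: (fun y => G (upd (upd v p y0) p y)) = (fun y => G (upd v p y)))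
    by (apply functional_extensionality; intro; rewrite upd_upd; auto).
  rewrite E. reflexivity. Qed.

Lemma fin_delta l (P : nat -> R -> Prop) :
  (forall q d d', 0 < d' <= d -> P q d -> P q d') ->
  (forall q, (q < l)%nat -> exists d, 0 < d /\ P q d) ->
  exists d, 0 < d /\ forall q, (q < l)%nat -> P q d.
Proof.
  intros Hmono. induction l; intros H.
  - exists 1. split. lra. intros; lia.
  - destruct IHl as [d1 [Hd1 H1]]. intros; apply H; lia.
    destruct (H l (Nat.lt_succ_diag_r l)) as [d2 [Hd2 H2]].
    exists (Rmin d1 d2). split. apply Rmin_glb_lt; auto.
    intros q Hq. destruct (Nat.eq_dec q l).
    + subst. apply (Hmono l d2). split. apply Rmin_glb_lt; auto. apply Rmin_r. auto.
    + apply (Hmono q d1). split. apply Rmin_glb_lt; auto. apply Rmin_l. apply H1. lia.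
Qed.

Lemma exd_cpt (f : R -> R) x : ex_derive f x -> continuity_pt f x.
Proof. intro H. apply continuity_pt_filterlim. apply exd_cont. auto. Qed.

Lemma between_abs a b c : Rmin a b <= c <= Rmax a b -> Rabs (c - a) <= Rabs (b - a).
Proof.
  unfold Rmin, Rmax. destruct (Rle_dec a b); intros [H1 H2].
  - rewrite (Rabs_pos_eq (c - a)) by lra. rewrite (Rabs_pos_eq (b - a)) by lra. lra.
  - rewrite (Rabs_left1 (c - a)) by lra. rewrite (Rabs_left1 (b - a)) by lra. lra.
Qed.

Lemma chain_step l G k (A : R -> nat -> R) (B : R -> R) z dB :
  goodG l G -> (k < l)%nat ->
  (forall q, (q < l)%nat -> forall e, 0 < e -> exists d, 0 < d /\
      forall z', Rabs (z' - z) < d -> Rabs (A z' q - A z q) < e) ->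
  is_derive B z dB ->
  is_derive (fun z' => G (upd (A z') k (B z')) - G (upd (A z') k (B z))) z
    (Gp G k (upd (A z) k (B z)) * dB).
Proof.
  intros HG Hk HA HB.
  set (V0 := upd (A z) k (B z)). set (L := Gp G k V0).
  apply is_derive_Reals. intros eps Heps.
  assert (HB' := HB). apply is_derive_Reals in HB'.
  set (e1 := Rmin 1 (eps / (2 * (Rabs L + 1)))).
  assert (He1 : 0 < e1).
  { unfold e1. apply Rmin_glb_lt. lra. apply Rdiv_lt_0_compat; auto. pose proof (Rabs_pos L); lra. }
  destruct (HB' e1 He1) as [d1 Hd1].
  set (e2 := eps / (2 * (Rabs dB + 1))).
  assert (He2 : 0 < e2) by (apply Rdiv_lt_0_compat; auto; pose proof (Rabs_pos dB); lra).
  destruct HG as [HG1 [HG2 HG3]].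
  destruct (HG3 k V0 Hk e2 He2) as [d2 [Hd2 Hc2]].
  assert (HBc : continuous B z) by (apply exd_cont; exists dB; auto).
  destruct (cont_eps B z HBc d2 Hd2) as [d3 [Hd3 Hc3]].
  destruct (fin_delta l (fun q d => forall z', Rabs (z' - z) < d -> Rabs (A z' q - A z q) < d2)) as [d4 [Hd4 Hc4]].
  { intros q d d' Hdd H z' Hz'. apply H. lra. }
  { intros q Hq. apply HA; auto. }
  assert (Hd : 0 < Rmin d1 (Rmin d3 d4)).
  { apply Rmin_glb_lt. apply cond_pos. apply Rmin_glb_lt; auto. }
  exists (mkposreal _ Hd). intros h Hh0 Hh. simpl in Hh.
  assert (Hh1 : Rabs h < d1) by (eapply Rlt_le_trans; [exact Hh| apply Rmin_l]).
  assert (Hh3 : Rabs h < d3) by (eapply Rlt_le_trans; [exact Hh| eapply Rle_trans; [apply Rmin_r| apply Rmin_l]]).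
  assert (Hh4 : Rabs h < d4) by (eapply Rlt_le_trans; [exact Hh| eapply Rle_trans; [apply Rmin_r| apply Rmin_r]]).
  set (A' := A (z + h)).
  assert (Hz : Rabs (z + h - z) = Rabs h) by (f_equal; ring).
  destruct (MVT_gen (fun y => G (upd A' k y)) (B z) (B (z + h)) (fun y => Derive (fun y => G (upd A' k y)) y)) as [c [Hc Hmvt]].
  { intros x _. apply isd_correct. apply (goodG_ex l); auto. split; auto. }
  { intros x _. apply exd_cpt. apply (goodG_ex l); auto. split; auto. }
  simpl in Hmvt.
  rewrite goodG_D in Hmvt.
  replace ((G (upd A' k (B (z + h))) - G (upd A' k (B z)) -
            (G (upd (A z) k (B z)) - G (upd (A z) k (B z)))) / h - L * dB)
    with (Gp G k (upd A' k c) * ((B (z + h) - B z) / h) - L * dB).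
  2: { rewrite Hmvt. field. auto. }
  assert (HQ : Rabs ((B (z + h) - B z) / h - dB) < e1) by (apply Hd1; auto).
  assert (Hxi : Rabs (Gp G k (upd A' k c) - L) < e2).
  { apply Hc2. intros q Hq. unfold V0. destruct (Nat.eq_dec q k).
    - subst. rewrite !upd_same. eapply Rle_lt_trans. apply between_abs; eauto.
      apply Hc3. rewrite Rplus_comm. unfold Rminus. rewrite Rplus_assoc, Rplus_opp_r, Rplus_0_r. auto.
    - rewrite !upd_other by auto. unfold A'. apply Hc4; auto. rewrite Hz; auto. }
  set (Q := (B (z + h) - B z) / h). fold Q in HQ.
  set (X := Gp G k (upd A' k c)). fold X in Hxi.
  replace (X * Q - L * dB) with ((X - L) * Q + L * (Q - dB)) by ring.
  apply Rle_lt_trans with (Rabs ((X - L) * Q) + Rabs (L * (Q - dB))). apply Rabs_triang. rewrite !Rabs_mult.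
  assert (HQb : Rabs Q <= Rabs dB + 1).
  { replace Q with ((Q - dB) + dB) by ring. eapply Rle_trans. apply Rabs_triang.
    assert (e1 <= 1) by apply Rmin_l. lra. }
  assert (T1 : Rabs (X - L) * Rabs Q <= e2 * (Rabs dB + 1)).
  { apply Rmult_le_compat; try apply Rabs_pos; lra. }
  assert (T2 : Rabs L * Rabs (Q - dB) <= Rabs L * e1).
  { apply Rmult_le_compat_l. apply Rabs_pos. lra. }
  assert (T3 : Rabs L * e1 < eps / 2).
  { apply Rle_lt_trans with (Rabs L * (eps / (2 * (Rabs L + 1)))).
    apply Rmult_le_compat_l. apply Rabs_pos. apply Rmin_r.
    pose proof (Rabs_pos L).
    replace (Rabs L * (eps / (2 * (Rabs L + 1)))) with ((eps / 2) * (Rabs L / (Rabs L + 1))) by (field; lra).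
    rewrite <- (Rmult_1_r (eps / 2)) at 2. apply Rmult_lt_compat_l. lra.
    apply Rmult_lt_reg_r with (Rabs L + 1). lra. unfold Rdiv. rewrite Rmult_assoc, Rinv_l by lra. lra. }
  assert (T4 : e2 * (Rabs dB + 1) = eps / 2).
  { unfold e2. pose proof (Rabs_pos dB). field. lra. }
  lra.
Qed.

Lemma chain l G (V : R -> nat -> R) (V' : nat -> R) z : goodG l G ->
  (forall q, (q < l)%nat -> is_derive (fun z => V z q) z (V' q)) ->
  is_derive (fun z => G (V z)) z (sumR l (fun p => Gp G p (V z) * V' p)).
Proof.
  intros HG HV.
  set (W := fun k z' q => if (q <? k)%nat then V z' q else V z q).
  assert (HWz : forall k, W k z = V z).
  { intro k. apply functional_extensionality; intro q. unfold W. destruct (q <? k)%nat; auto. }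
  assert (HW : forall k, (k <= l)%nat -> is_derive (fun z' => G (W k z')) z (sumR k (fun p => Gp G p (V z) * V' p))).
  { induction k; intro Hk.
    - refine (isd_ext (fun _ => G (V z)) _ z _ _ _).
      + intro t. unfold W. reflexivity.
      + exact (isd_const (G (V z)) z).
    - simpl.
      refine (isd_ext (fun z' => (G (upd (W k z') k (V z' k)) - G (upd (W k z') k (V z k))) + G (W k z')) _ z _ _ _).
      { intro t. assert (E1 : upd (W k t) k (V z k) = W k t).
        { apply functional_extensionality; intro q. unfold upd, W. destruct (Nat.eqb q k) eqn:E; auto.
          apply Nat.eqb_eq in E. subst. rewrite Nat.ltb_irrefl. auto. }
        assert (E2 : upd (W k t) k (V t k) = W (S k) t).
        { apply functional_extensionality; intro q. unfold upd, W. destruct (Nat.eqb q k) eqn:E.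
          apply Nat.eqb_eq in E. subst. replace (k <? S k)%nat with true; auto. symmetry; apply Nat.ltb_lt; lia.
          apply Nat.eqb_neq in E. destruct (q <? k)%nat eqn:E3; destruct (q <? S k)%nat eqn:E4; auto.
          apply Nat.ltb_lt in E3. apply Nat.ltb_ge in E4. lia.
          apply Nat.ltb_ge in E3. apply Nat.ltb_lt in E4. lia. }
        rewrite E1, E2. ring. }
      replace (sumR k (fun p => Gp G p (V z) * V' p) + Gp G k (V z) * V' k)
        with (Gp G k (upd (W k z) k (V z k)) * V' k + sumR k (fun p => Gp G p (V z) * V' p)).
      2: { rewrite HWz, upd_self. ring. }
      apply (isd_plus (fun z' => G (upd (W k z') k (V z' k)) - G (upd (W k z') k (V z k))) (fun z' => G (W k z'))).
      + apply (chain_step l G k (W k) (fun z' => V z' k) z (V' k)); auto; try lia.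
        intros q Hq e He. unfold W. destruct (q <? k)%nat.
        * apply cont_eps; auto. apply exd_cont. eexists. apply HV; auto.
        * exists 1. split. lra. intros. rewrite Rminus_eq_0, Rabs_R0. auto.
      + apply IHk. lia. }
  refine (isd_ext (fun z' => G (W l z')) _ z _ _ _).
  - intro t. destruct HG as [HG1 _]. apply HG1. intros p Hp. unfold W.
    replace (p <? l)%nat with true; auto. symmetry; apply Nat.ltb_lt; auto.
  - apply HW. lia.
Qed.

Lemma pdN_dep l F s : depends_on_first l F -> List.Forall (fun p => (p < l)%nat) s ->
  depends_on_first l (pdN s F).
Proof.
  intros HF. induction s; intros Hs. simpl; auto.
  inversion Hs; subst. specialize (IHs H2).
  intros v w Hvw. simpl. rewrite (Hvw a H1).
  f_equal. apply functional_extensionality; intro y. apply IHs.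
  intros p Hp. unfold upd. destruct (Nat.eqb p a); auto.
Qed.

Lemma goodG_pdN l H s : depends_on_first l H -> smoothN l H -> List.Forall (fun p => (p < l)%nat) s ->
  goodG l (pdN s H).
Proof.
  intros Hd Hs Hf. split; [|split].
  - apply pdN_dep; auto.
  - intros v p Hp. apply (Hs s v Hf); auto.
  - intros p v Hp. change (Gp (pdN s H) p) with (pdN (p :: s) H). apply (Hs (p :: s) v). constructor; auto.
Qed.

Lemma contN_pdN l H s v : smoothN l H -> List.Forall (fun p => (p < l)%nat) s -> contN l (pdN s H) v.
Proof. intros Hs Hf. apply (Hs s v Hf). Qed.

Lemma Rk_sumR k N (F : nat -> R -> R) :
  (forall i, (i < N)%nat -> Rk k (F i)) -> Rk k (fun z => sumR N (fun i => F i z)).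
Proof.
  induction N; intros H; simpl.
  - apply Rk_const.
  - apply (Rk_plus k (fun z => sumR N (fun i => F i z))). apply IHN; intros; apply H; lia. apply H; lia.
Qed.

Lemma comp_smooth l H (Y : nat -> R -> R) : depends_on_first l H -> smoothN l H ->
  (forall q, (q < l)%nat -> smooth1 (Y q)) ->
  forall s, List.Forall (fun p => (p < l)%nat) s -> smooth1 (fun z => pdN s H (fun q => Y q z)).
Proof.
  intros Hd Hs HY.
  assert (Hc : forall s z, List.Forall (fun p => (p < l)%nat) s ->
    is_derive (fun z => pdN s H (fun q => Y q z)) z
      (sumR l (fun p => pdN (p :: s) H (fun q => Y q z) * Derive (Y p) z))).
  { intros s z Hf. apply (chain l (pdN s H) (fun z q => Y q z) (fun q => Derive (Y q) z) z).
    apply goodG_pdN; auto. intros q Hq. apply isd_correct. apply smooth1_ex. auto. }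
  intros s Hf. apply smooth1_Rk. intro k. revert s Hf. induction k; intros s Hf.
  - intros j Hj z. assert (j = 0%nat) by lia. subst. simpl. split.
    eexists; apply Hc; auto. apply exd_cont. eexists; apply Hc; auto.
  - apply Rk_S. intro z; eexists; apply Hc; auto.
    replace (Derive (fun z => pdN s H (fun q => Y q z)))
      with (fun z => sumR l (fun p => pdN (p :: s) H (fun q => Y q z) * Derive (Y p) z)).
    2: { apply functional_extensionality; intro z. symmetry. apply isd_unique. apply Hc; auto. }
    apply (Rk_sumR k l (fun p z => pdN (p :: s) H (fun q => Y q z) * Derive (Y p) z)).
    intros p Hp. apply (Rk_mult k (fun z => pdN (p :: s) H (fun q => Y q z)) (Derive (Y p))).
    apply IHk. constructor; auto.
    apply smooth1_Rk. apply smooth1_Derive. auto.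
Qed.

Lemma contN_2d l F (V : R -> R -> nat -> R) x y : contN l F (V x y) ->
  (forall q, (q < l)%nat -> continuity_2d_pt (fun u v => V u v q) x y) ->
  continuity_2d_pt (fun u v => F (V u v)) x y.
Proof.
  intros HF HV eps. destruct (HF eps (cond_pos eps)) as [dl [Hdl H1]].
  destruct (fin_delta l (fun q d => forall u v, Rabs (u - x) < d -> Rabs (v - y) < d ->
     Rabs (V u v q - V x y q) < dl)) as [d [Hd H2]].
  { intros q d d' Hdd H u v Hu Hv. apply H; lra. }
  { intros q Hq. destruct (HV q Hq (mkposreal _ Hdl)) as [d Hd]. exists d. split. apply cond_pos.
    intros u v Hu Hv. apply (Hd u v Hu Hv). }
  exists (mkposreal _ Hd). intros u v Hu Hv. simpl in Hu, Hv. apply H1. intros p Hp. apply H2; auto.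
Qed.

Lemma cont_2d_of_1d (g : R -> R) x y : continuous g y -> continuity_2d_pt (fun u v => g v) x y.
Proof.
  intros Hg eps. destruct (cont_eps g y Hg eps (cond_pos eps)) as [d [Hd H]].
  exists (mkposreal _ Hd). intros u v _ Hv. apply H. auto.
Qed.

Lemma cont_1d_of_2d (g : R -> R) x y : continuity_2d_pt (fun u v => g v) x y -> continuous g y.
Proof.
  intros Hg. apply eps_cont. intros eps Heps. destruct (Hg (mkposreal _ Heps)) as [d Hd].
  exists d. split. apply cond_pos. intros v Hv. apply (Hd x v). rewrite Rminus_eq_0, Rabs_R0. apply cond_pos. auto.
Qed.

Lemma cont_2d_sumR N (F : nat -> R -> R -> R) x y :
  (forall i, (i < N)%nat -> continuity_2d_pt (F i) x y) ->
  continuity_2d_pt (fun u v => sumR N (fun i => F i u v)) x y.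
Proof.
  induction N; intros H; simpl.
  - apply continuity_2d_pt_const.
  - apply (continuity_2d_pt_plus (fun u v => sumR N (fun i => F i u v)) (F N)).
    apply IHN; intros; apply H; lia. apply H; lia.
Qed.

Lemma isd_lin (a c u : R) : is_derive (fun u => a + u * c) u c.
Proof. auto_derive; auto; ring. Qed.

Lemma isd_eq (f : R -> R) x l1 l2 : is_derive f x l1 -> l1 = l2 -> is_derive f x l2.
Proof. intros H E; subst; auto. Qed.

Lemma vd l H a b (Y w : nat -> R -> R) : depends_on_first l H -> smoothN l H ->
  (forall q, (q < l)%nat -> forall z, continuous (Y q) z) ->
  (forall q, (q < l)%nat -> forall z, continuous (w q) z) ->
  is_derive (fun eps => RInt (fun z => H (fun q => Y q z + eps * w q z)) a b) 0
    (RInt (fun z => sumR l (fun p => pdN (p :: nil) H (fun q => Y q z) * w p z)) a b).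
Proof.
  intros Hd Hs HY Hw.
  assert (HG : goodG l H) by (apply (goodG_pdN l H nil); auto).
  assert (Hc : forall u t, is_derive (fun u => H (fun q => Y q t + u * w q t)) u
      (sumR l (fun p => Gp H p (fun q => Y q t + u * w q t) * w p t))).
  { intros u t. apply (chain l H (fun u q => Y q t + u * w q t) (fun q => w q t) u HG).
    intros q Hq. apply isd_lin. }
  assert (Hc2 : forall v, (fun u => Derive (fun z => H (fun q => Y q v + z * w q v)) u) =
      (fun u => sumR l (fun p => Gp H p (fun q => Y q v + u * w q v) * w p v))).
  { intro v. apply functional_extensionality; intro u. apply isd_unique. apply Hc. }
  assert (Hcont : forall F s, List.Forall (fun p => (p < l)%nat) s -> F = pdN s H -> forall x y,
     continuity_2d_pt (fun u v => F (fun q => Y q v + u * w q v)) x y).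
  { intros F s Hf HF x y. subst F.
    apply (contN_2d l (pdN s H) (fun u v q => Y q v + u * w q v)). apply contN_pdN; auto.
    intros q Hq. apply (continuity_2d_pt_plus (fun u v => Y q v) (fun u v => u * w q v)).
    apply cont_2d_of_1d; auto.
    apply (continuity_2d_pt_mult (fun u v => u) (fun u v => w q v)). apply continuity_2d_pt_id1.
    apply cont_2d_of_1d; auto. }
  eapply isd_eq.
  apply (is_derive_RInt_param (fun eps z => H (fun q => Y q z + eps * w q z)) a b 0).
  - apply filter_forall. intros x t _. eexists. apply Hc.
  - intros t _. simpl.
    apply (continuity_2d_pt_ext (fun u v => sumR l (fun p => Gp H p (fun q => Y q v + u * w q v) * w p v))).
    { intros u v. symmetry. apply isd_unique. apply Hc. }
    apply (cont_2d_sumR l (fun p u v => Gp H p (fun q => Y q v + u * w q v) * w p v)).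
    intros p Hp. apply (continuity_2d_pt_mult (fun u v => Gp H p (fun q => Y q v + u * w q v)) (fun u v => w p v)).
    apply (Hcont (Gp H p) (p :: nil)). constructor; auto. reflexivity.
    apply cont_2d_of_1d; auto.
  - apply filter_forall. intros x. apply exRInt_cont. intro z.
    apply (cont_1d_of_2d _ 0 z).
    apply (contN_2d l H (fun u v q => Y q v + x * w q v)). apply (contN_pdN l H nil); auto.
    intros q Hq. apply cont_2d_of_1d. apply cont_plus; auto. apply cont_mult; auto. apply cont_const.
  - simpl. f_equal. apply functional_extensionality; intro z.
    etransitivity. apply isd_unique. apply Hc.
    replace (fun q => Y q z + 0 * w q z) with (fun q => Y q z).
    reflexivity. apply functional_extensionality; intro q. ring.
Qed.

Definition falses (j : nat) : list bool := repeat false j.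

Lemma pd2_app s1 s2 f : pd2 (s1 ++ s2) f = pd2 s1 (pd2 s2 f).
Proof. induction s1 as [|b s1 IH]. reflexivity. simpl. rewrite IH. reflexivity. Qed.

Lemma smooth2_pd2 s f : smooth2 f -> smooth2 (pd2 s f).
Proof. intros H s' t z. rewrite <- pd2_app. apply H. Qed.

Lemma cont2_2d f t z : cont2 f t z -> continuity_2d_pt f t z.
Proof.
  intros H eps. destruct (H eps (cond_pos eps)) as [d [Hd H2]].
  exists (mkposreal _ Hd). intros u v Hu Hv. apply H2; auto.
Qed.

Lemma swap f : smooth2 f -> pd2 (true :: false :: nil) f = pd2 (false :: true :: nil) f.
Proof.
  intros H. apply functional_extensionality; intro t. apply functional_extensionality; intro z.
  simpl. apply Schwarz.
  - exists (mkposreal 1 Rlt_0_1). intros u v _ _. split; [|split; [|split]].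
    + apply (H nil u v).
    + apply (H nil u v).
    + apply (H (false :: nil) u v).
    + apply (H (true :: nil) u v).
  - apply cont2_2d. apply (H (true :: false :: nil) t z).
  - apply cont2_2d. apply (H (false :: true :: nil) t z).
Qed.

Lemma commute j f : smooth2 f -> pd2 (true :: falses j) f = pd2 (falses j ++ true :: nil) f.
Proof.
  intros H. induction j. reflexivity.
  change (true :: falses (S j)) with ((true :: false :: nil) ++ falses j).
  rewrite pd2_app. rewrite swap by (apply smooth2_pd2; auto).
  change (pd2 (false :: true :: nil) (pd2 (falses j) f)) with (pd2 (false :: nil) (pd2 (true :: nil) (pd2 (falses j) f))).
  change (pd2 (true :: nil) (pd2 (falses j) f)) with (pd2 (true :: falses j) f).
  rewrite IHj. rewrite <- pd2_app. reflexivity.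
Qed.

Lemma pd2_falses j f t z : pd2 (falses j) f t z = Derive_n (f t) j z.
Proof.
  revert z. induction j; intro z. reflexivity.
  simpl. apply Derive_ext. intro; apply IHj.
Qed.

Lemma smooth2_slice f t : smooth2 f -> smooth1 (f t).
Proof.
  intros H k z.
  assert (E : Derive_n (f t) k = fun z => pd2 (falses k) f t z).
  { apply functional_extensionality; intro; symmetry; apply pd2_falses. }
  rewrite E. split.
  - apply (H (falses k) t z).
  - apply eps_cont. intros eps Heps. destruct (proj2 (proj2 (H (falses k) t z)) eps Heps) as [d [Hd H2]].
    exists d. split; auto. intros y Hy. apply H2; auto. rewrite Rminus_eq_0, Rabs_R0; auto.
Qed.

Lemma smooth2_dt_slice f t : smooth2 f -> smooth1 (fun z => Derive (fun t' => f t' z) t).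
Proof. intros H. apply (smooth2_slice (pd2 (true :: nil) f) t). apply smooth2_pd2; auto. Qed.

Lemma dt_Dn f j t z : smooth2 f ->
  Derive (fun t' => Derive_n (f t') j z) t = Derive_n (fun z' => Derive (fun t' => f t' z') t) j z.
Proof.
  intros H.
  transitivity (pd2 (true :: falses j) f t z).
  { simpl. apply Derive_ext. intro; symmetry; apply pd2_falses. }
  rewrite commute by auto. rewrite pd2_app. rewrite pd2_falses. reflexivity.
Qed.

Lemma sumR_ext N f g : (forall k, (k < N)%nat -> f k = g k) -> sumR N f = sumR N g.
Proof. induction N; intros H; simpl; auto. rewrite IHN by (intros; apply H; lia). rewrite H by lia. auto. Qed.

Lemma sumR_scal N c f : c * sumR N f = sumR N (fun k => c * f k).
Proof. induction N; simpl. ring. rewrite <- IHN. ring. Qed.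

Lemma sumR_scal_r N c f : sumR N f * c = sumR N (fun k => f k * c).
Proof. induction N; simpl. ring. rewrite <- IHN. ring. Qed.

Lemma sumR_plus N f g : sumR N (fun k => f k + g k) = sumR N f + sumR N g.
Proof. induction N; simpl. ring. rewrite IHN. ring. Qed.

Lemma sumR_opp N f : sumR N (fun k => - f k) = - sumR N f.
Proof. induction N; simpl. ring. rewrite IHN. ring. Qed.

Lemma sumR_zero N : sumR N (fun _ => 0) = 0.
Proof. induction N; simpl. ring. rewrite IHN. ring. Qed.

Lemma sumR_swap N M (F : nat -> nat -> R) :
  sumR N (fun k => sumR M (fun q => F k q)) = sumR M (fun q => sumR N (fun k => F k q)).
Proof.
  induction N; simpl. symmetry; apply sumR_zero.
  rewrite IHN. rewrite <- sumR_plus. reflexivity.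
Qed.

Lemma sumR_ind N k0 (F : nat -> R) : (k0 < N)%nat ->
  sumR N (fun k => if Nat.eqb k0 k then F k else 0) = F k0.
Proof.
  induction N; intros H. lia. simpl. destruct (Nat.eq_dec k0 N).
  - subst. rewrite Nat.eqb_refl. rewrite (sumR_ext N _ (fun _ => 0)). rewrite sumR_zero. ring.
    intros k Hk. destruct (Nat.eqb N k) eqn:E; auto. apply Nat.eqb_eq in E; lia.
  - rewrite IHN by lia. destruct (Nat.eqb k0 N) eqn:E. apply Nat.eqb_eq in E; lia. ring.
Qed.

Lemma sumR_ind' N k0 (F : nat -> R) : (k0 < N)%nat ->
  sumR N (fun k => if Nat.eqb k k0 then F k else 0) = F k0.
Proof.
  intro H. rewrite <- (sumR_ind N k0 F H). apply sumR_ext. intros k _.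
  rewrite Nat.eqb_sym. reflexivity.
Qed.

Lemma RInt_sumR N (F : nat -> R -> R) a b : (forall k, (k < N)%nat -> ex_RInt (F k) a b) ->
  RInt (fun z => sumR N (fun k => F k z)) a b = sumR N (fun k => RInt (F k) a b).
Proof.
  induction N; intros H; simpl.
  - rewrite RInt_const. unfold scal; simpl; unfold mult; simpl. ring.
  - rewrite (RInt_plus (V:=R_CompleteNormedModule) (fun z => sumR N (fun k => F k z)) (F N)).
    rewrite IHN by (intros; apply H; lia). reflexivity.
    apply (ex_RInt_ext (fun z => sumR N (fun k => F k z))). intros; reflexivity.
    clear IHN. induction N; simpl. apply ex_RInt_const.
    apply (ex_RInt_plus (V:=R_NormedModule) (fun z => sumR N (fun k => F k z)) (F N)).
    apply IHN; intros; apply H; lia. apply H; lia.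
    apply H; lia.
Qed.

Lemma RInt_scal_R (f : R -> R) c a b : ex_RInt f a b -> RInt (fun z => c * f z) a b = c * RInt f a b.
Proof. intro H. apply (RInt_scal (V:=R_CompleteNormedModule) f a b c H). Qed.

Lemma RInt_minus_R (f g : R -> R) a b : ex_RInt f a b -> ex_RInt g a b ->
  RInt (fun z => f z - g z) a b = RInt f a b - RInt g a b.
Proof. intros H1 H2. apply (RInt_minus (V:=R_CompleteNormedModule) f g a b H1 H2). Qed.

Lemma RInt_ext_R (f g : R -> R) a b : (forall z, f z = g z) -> RInt f a b = RInt g a b.
Proof. intro H. f_equal. apply functional_extensionality. auto. Qed.

Lemma Jop_smooth m P i k f : smooth1 f -> smooth1 (Jop m P i k f).
Proof.
  intro H. unfold Jop. apply (smooth1_sumR (S m) (fun j z => P j i k * Derive_n f j z)).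
  intros j _. apply smooth1_scal. apply smooth1_Derive_n; auto.
Qed.

Lemma Derive_n_zero j z : Derive_n (fun _ : R => 0) j z = 0.
Proof. destruct j. reflexivity. apply Derive_n_const. Qed.

Lemma smooth1_if (c : bool) (f : R -> R) : smooth1 f -> smooth1 (fun z => if c then f z else 0).
Proof. intro H. destruct c. exact H. apply smooth1_const. Qed.

Lemma Derive_n_if (c : bool) (f : R -> R) j z :
  Derive_n (fun z => if c then f z else 0) j z = if c then Derive_n f j z else 0.
Proof. destruct c. reflexivity. apply Derive_n_zero. Qed.

Definition gbf (H : (nat -> R) -> R) I (x : nat -> R -> R -> R) t p z : R :=
  pdN (p :: nil) H (fun q => xbar I x q t z).
Definition Gq H I x t q w : R := (-1) ^ (jp I q) * Derive_n (gbf H I x t q) (jp I q) w.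
Definition Gk H I x t k z : R :=
  sumR (length I) (fun q => if Nat.eqb (ip I q) k then Gq H I x t q z else 0).

Lemma Dn_lin (f h : R -> R) c j z : smooth1 f -> smooth1 h ->
  Derive_n (fun z => f z + c * h z) j z = Derive_n f j z + c * Derive_n h j z.
Proof.
  intros Hf Hh. rewrite (Derive_n_plus_s f (fun z => c * h z)); auto.
  rewrite Derive_n_scal_fun. reflexivity. apply smooth1_scal; auto.
Qed.

Lemma zero_test a b : a < b -> test_fun a b (fun _ => 0).
Proof. intro H. split. apply smooth1_const. exists ((a + b) / 2), ((a + b) / 2). repeat split; try lra. Qed.

Lemma xbar_smooth (n : nat) I x t p : (ip I p < n)%nat -> (forall i, (i < n)%nat -> smooth2 (x i)) ->
  smooth1 (fun z => xbar I x p t z).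
Proof.
  intros Hp Hx. unfold xbar. apply (smooth1_Derive_n (x (ip I p) t)). apply smooth2_slice. auto.
Qed.

Lemma gbf_smooth n I H x t p : (forall q, (q < length I)%nat -> (ip I q < n)%nat) ->
  (forall i, (i < n)%nat -> smooth2 (x i)) -> depends_on_first (length I) H -> smoothN (length I) H ->
  (p < length I)%nat -> smooth1 (gbf H I x t p).
Proof.
  intros HIn Hx Hd Hs Hp. unfold gbf.
  apply (comp_smooth (length I) H (fun q z => xbar I x q t z)); auto.
  intros q Hq. apply (xbar_smooth n); auto.
Qed.

Lemma Gq_smooth n I H x t p : (forall q, (q < length I)%nat -> (ip I q < n)%nat) ->
  (forall i, (i < n)%nat -> smooth2 (x i)) -> depends_on_first (length I) H -> smoothN (length I) H ->
  (p < length I)%nat -> smooth1 (Gq H I x t p).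
Proof.
  intros. unfold Gq. apply (smooth1_scal _ (fun w => Derive_n (gbf H I x t p) (jp I p) w)).
  apply smooth1_Derive_n. apply (gbf_smooth n); auto.
Qed.

Lemma Gk_smooth n I H x t k : (forall q, (q < length I)%nat -> (ip I q < n)%nat) ->
  (forall i, (i < n)%nat -> smooth2 (x i)) -> depends_on_first (length I) H -> smoothN (length I) H ->
  smooth1 (Gk H I x t k).
Proof.
  intros. unfold Gk. apply (smooth1_sumR (length I) (fun q z => if Nat.eqb (ip I q) k then Gq H I x t q z else 0)).
  intros q Hq. apply smooth1_if. apply (Gq_smooth n); auto.
Qed.

Lemma key_identity a b n I H (x g : nat -> R -> R -> R) t : a < b ->
  (forall p, (p < length I)%nat -> (ip I p < n)%nat) ->
  depends_on_first (length I) H -> smoothN (length I) H ->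
  (forall i, (i < n)%nat -> smooth2 (x i)) ->
  (forall i, (i < n)%nat -> smooth2 (g i)) ->
  is_var_deriv n a b (Hfun a b I H) (fun i => x i t) (fun i => g i t) ->
  forall k, (k < n)%nat -> forall z, a <= z <= b -> g k t z = Gk H I x t k z.
Proof.
  intros Hab HIn Hd Hs Hx Hg Hvd k Hk.
  set (l := length I).
  assert (Hgs : smooth1 (g k t)) by (apply smooth2_slice; auto).
  assert (HGk : smooth1 (Gk H I x t k)) by (apply (Gk_smooth n); auto).
  assert (Hint : forall phi, test_fun a b phi -> RInt (fun z => (g k t z - Gk H I x t k z) * phi z) a b = 0).
  { intros phi Hphi.
    assert (Hphis : smooth1 phi) by apply Hphi.
    set (eta := fun i => if Nat.eqb i k then phi else (fun _ : R => 0)).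
    assert (Hetas : forall i, smooth1 (eta i)).
    { intro i. unfold eta. destruct (Nat.eqb i k); auto. apply smooth1_const. }
    assert (Htv : test_vec n a b eta).
    { intros i Hi. unfold eta. destruct (Nat.eqb i k); auto. apply zero_test; auto. }
    set (w := fun p => Derive_n (eta (ip I p)) (jp I p)).
    assert (Hws : forall p, smooth1 (w p)) by (intro p; apply smooth1_Derive_n; auto).
    assert (D1 := Hvd eta Htv).
    assert (D2 : is_derive (fun eps => Hfun a b I H (fun i z => x i t z + eps * eta i z)) 0
                 (RInt (fun z => sumR l (fun p => gbf H I x t p z * w p z)) a b)).
    { refine (isd_ext (fun eps => RInt (fun z => H (fun q => xbar I x q t z + eps * w q z)) a b) _ 0 _ _
               (vd l H a b (fun q => xbar I x q t) w Hd Hs _ _)).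
      - intro eps. unfold Hfun. apply RInt_ext_R. intro z. apply Hd. intros p Hp.
        unfold xbar, w. rewrite Dn_lin. reflexivity.
        apply smooth2_slice; auto. apply Hetas.
      - intros q Hq z. apply smooth1_cont. apply (xbar_smooth n); auto.
      - intros q Hq z. apply smooth1_cont. auto. }
    assert (E : RInt (fun z => sumR n (fun i => g i t z * eta i z)) a b =
                RInt (fun z => sumR l (fun p => gbf H I x t p z * w p z)) a b).
    { rewrite <- (isd_unique _ _ _ D1). apply isd_unique. exact D2. }
    assert (EL : RInt (fun z => sumR n (fun i => g i t z * eta i z)) a b = RInt (fun z => g k t z * phi z) a b).
    { apply RInt_ext_R. intro z. rewrite <- (sumR_ind' n k (fun i => g i t z * phi z) Hk).
      apply sumR_ext. intros i Hi. unfold eta. destruct (Nat.eqb i k); ring. }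
    assert (ER : RInt (fun z => sumR l (fun p => gbf H I x t p z * w p z)) a b =
                 RInt (fun z => Gk H I x t k z * phi z) a b).
    { rewrite (RInt_sumR l (fun p z => gbf H I x t p z * w p z)).
      2: { intros p Hp. apply exRInt_cont. intro z. apply cont_mult; apply smooth1_cont; auto.
           apply (gbf_smooth n); auto. }
      transitivity (sumR l (fun p => RInt (fun z => Gq H I x t p z * eta (ip I p) z) a b)).
      { apply sumR_ext. intros p Hp.
        assert (Hp1 := parts a b (eta (ip I p)) Hab (Htv _ (HIn p Hp)) (jp I p) (gbf H I x t p)
                  (gbf_smooth n I H x t p HIn Hx Hd Hs Hp)).
        unfold w. rewrite Hp1.
        unfold Gq. rewrite <- RInt_scal_R. apply RInt_ext_R. intro z. ring.
        apply exRInt_cont. intro z. apply cont_mult; apply smooth1_cont; auto.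
        apply smooth1_Derive_n. apply (gbf_smooth n); auto. }
      rewrite <- (RInt_sumR l (fun p z => Gq H I x t p z * eta (ip I p) z)).
      2: { intros p Hp. apply exRInt_cont. intro z. apply cont_mult; apply smooth1_cont; auto.
           apply (Gq_smooth n); auto. }
      apply RInt_ext_R. intro z. unfold Gk. rewrite sumR_scal_r. apply sumR_ext. intros p Hp.
      unfold eta. destruct (Nat.eqb (ip I p) k); ring. }
    rewrite (RInt_ext_R _ (fun z => g k t z * phi z - Gk H I x t k z * phi z)) by (intro; ring).
    rewrite RInt_minus_R. rewrite <- EL, E, ER. apply Rplus_opp_r.
    apply exRInt_cont; intro; apply cont_mult; apply smooth1_cont; auto.
    apply exRInt_cont; intro; apply cont_mult; apply smooth1_cont; auto. }
  apply (cont_closed (g k t) (Gk H I x t k) a b Hab).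
  - apply smooth1_cont; auto.
  - apply smooth1_cont; auto.
  - intros z Hz.
    assert (h0 := fundamental (fun z => g k t z - Gk H I x t k z) a b Hab).
    assert (g k t z - Gk H I x t k z = 0); [|lra].
    apply h0; auto. intro y.
    apply (continuous_ext (fun y => g k t y + (-1) * Gk H I x t k y)). intro y0; change (g k t y0 + -1 * Gk H I x t k y0 = g k t y0 - Gk H I x t k y0); ring.
    apply (cont_plus (g k t) (fun y => (-1) * Gk H I x t k y)).
    apply smooth1_cont; auto. apply (cont_mult (fun _ => -1) (Gk H I x t k)). apply cont_const.
    apply smooth1_cont; auto.
Qed.

Lemma sumR_if N (c : bool) f : sumR N (fun k => if c then f k else 0) = if c then sumR N f else 0.
Proof. destruct c. reflexivity. apply sumR_zero. Qed.

Lemma main_eq a b n m P I H (x g : nat -> R -> R -> R) t p z : a < b ->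
  (forall p, (p < length I)%nat -> (ip I p < n)%nat) ->
  depends_on_first (length I) H -> smoothN (length I) H ->
  (forall i, (i < n)%nat -> smooth2 (x i)) ->
  (forall i, (i < n)%nat -> smooth2 (g i)) ->
  is_var_deriv n a b (Hfun a b I H) (fun i => x i t) (fun i => g i t) ->
  (forall i z, (i < n)%nat -> a <= z <= b ->
         Derive (fun t' => x i t' z) t = sumR n (fun k => Jop m P i k (g k t) z)) ->
  (p < length I)%nat -> a <= z <= b ->
  Derive (fun t' => xbar I x p t' z) t = JJvec m P I (gbf H I x t) p z.
Proof.
  intros Hab HIn Hd Hs Hx Hg Hvd Hdt Hp Hz.
  set (l := length I). set (i := ip I p). set (j := jp I p).
  assert (Hi : (i < n)%nat) by (apply HIn; auto).
  set (RHS0 := fun y => sumR n (fun k => Jop m P i k (g k t) y)).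
  set (RHS1 := fun y => sumR n (fun k => Jop m P i k (Gk H I x t k) y)).
  set (RHS2 := fun y => sumR l (fun q => Jop m P i (ip I q) (Gq H I x t q) y)).
  assert (S0 : smooth1 RHS0).
  { apply (smooth1_sumR n (fun k y => Jop m P i k (g k t) y)). intros k Hk. apply Jop_smooth. apply smooth2_slice; auto. }
  assert (S1 : smooth1 RHS1).
  { apply (smooth1_sumR n (fun k y => Jop m P i k (Gk H I x t k) y)). intros k Hk. apply Jop_smooth. apply (Gk_smooth n); auto. }
  assert (SGq : forall q, (q < l)%nat -> smooth1 (Gq H I x t q)) by (intros; apply (Gq_smooth n); auto).
  transitivity (Derive_n (fun z' => Derive (fun t' => x i t' z') t) j z).
  { unfold xbar. apply (dt_Dn (x i) j t z). auto. }
  rewrite (Derive_n_eq_on (fun z' => Derive (fun t' => x i t' z') t) RHS0 a b Hab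
             (smooth2_dt_slice (x i) t (Hx i Hi)) S0 (fun y Hy => Hdt i y Hi Hy) j z Hz).
  assert (E3 : forall y, a <= y <= b -> RHS0 y = RHS1 y).
  { intros y Hy. unfold RHS0, RHS1. apply sumR_ext. intros k Hk. unfold Jop. apply sumR_ext. intros jj _.
    f_equal. apply (Derive_n_eq_on (g k t) (Gk H I x t k) a b Hab); auto.
    apply smooth2_slice; auto. apply (Gk_smooth n); auto.
    intros y0 Hy0. apply (key_identity a b n I H x g t); auto. }
  rewrite (Derive_n_eq_on RHS0 RHS1 a b Hab S0 S1 E3 j z Hz).
  replace RHS1 with RHS2.
  2: { apply functional_extensionality; intro y. unfold RHS1, RHS2, Jop.
       transitivity (sumR n (fun k => sumR l (fun q => if Nat.eqb (ip I q) k then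
                        sumR (S m) (fun jj => P jj i k * Derive_n (Gq H I x t q) jj y) else 0))).
       2: { apply sumR_ext. intros k Hk.
            transitivity (sumR (S m) (fun jj => sumR l (fun q => if Nat.eqb (ip I q) k then
                        P jj i k * Derive_n (Gq H I x t q) jj y else 0))).
            { rewrite (sumR_swap (S m) l). apply sumR_ext. intros q Hq. rewrite sumR_if. reflexivity. }
            apply sumR_ext. intros jj _. unfold Gk.
            rewrite (Derive_n_sumR l (fun q y => if Nat.eqb (ip I q) k then Gq H I x t q y else 0)).
            2: { intros q Hq. apply smooth1_if. auto. }
            rewrite sumR_scal. apply sumR_ext. intros q Hq. rewrite Derive_n_if.
            destruct (Nat.eqb (ip I q) k); ring. }
       symmetry. rewrite (sumR_swap n l). apply sumR_ext. intros q Hq.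
       rewrite (sumR_ind n (ip I q) (fun k => sumR (S m) (fun jj => P jj i k * Derive_n (Gq H I x t q) jj y))).
       reflexivity. apply HIn; auto. }
  unfold RHS2, JJvec. rewrite (Derive_n_sumR l (fun q y => Jop m P i (ip I q) (Gq H I x t q) y)).
  2: { intros q Hq. apply Jop_smooth. auto. }
  apply sumR_ext. intros q Hq. unfold JJop. reflexivity.
Qed.

Lemma JJop_expand m P I p q (f : R -> R) z : smooth1 f ->
  JJop m P I p q f z = sumR (S m) (fun j => P j (ip I p) (ip I q) * (-1) ^ (jp I q) *
                                            Derive_n f (jp I p + j + jp I q) z).
Proof.
  intros Hf. unfold JJop, Jop.
  rewrite (Derive_n_sumR (S m) (fun j z => P j (ip I p) (ip I q) *
             Derive_n (fun w => (-1) ^ jp I q * Derive_n f (jp I q) w) j z)).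
  2: { intros j _. apply smooth1_scal. apply smooth1_Derive_n. apply smooth1_scal. apply smooth1_Derive_n. auto. }
  apply sumR_ext. intros j _. rewrite Derive_n_scal_fun. rewrite Derive_n_comp.
  rewrite Derive_n_scal_l. rewrite Derive_n_comp.
  replace (jp I p + j + jp I q)%nat with (jp I p + j + jp I q)%nat by lia. ring_simplify.
  replace (jp I p + j + jp I q)%nat with (jp I p + j + jp I q)%nat by reflexivity. ring.
Qed.

Lemma sq_sign k : (-1) ^ k * (-1) ^ k = 1.
Proof. rewrite <- Rpow_mult_distr. replace (-1 * -1) with 1 by ring. apply pow1. Qed.

Lemma sign_lemma (A B : R) j jp jq : A = (-1) ^ (S j) * B ->
  A * (-1) ^ jq * (-1) ^ (jp + j + jq) = - (B * (-1) ^ jp).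
Proof.
  intro HA. subst A. rewrite !pow_add. simpl pow.
  transitivity (- (B * (-1) ^ jp) * ((-1) ^ j * (-1) ^ j) * ((-1) ^ jq * (-1) ^ jq)). ring.
  rewrite !sq_sign. ring.
Qed.

Lemma RInt_sumR_s N (F : nat -> R -> R) a b : (forall k, (k < N)%nat -> smooth1 (F k)) ->
  RInt (fun z => sumR N (fun k => F k z)) a b = sumR N (fun k => RInt (F k) a b).
Proof.
  intros H. apply RInt_sumR. intros k Hk. apply exRInt_cont. intro; apply smooth1_cont; auto.
Qed.

Lemma skew a b n m P I (e f : nat -> R -> R) : a < b ->
  (forall j i k, (j <= m)%nat -> (i < n)%nat -> (k < n)%nat -> P j i k = (-1) ^ (S j) * P j k i) ->
  (forall p, (p < length I)%nat -> (ip I p < n)%nat) ->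
  test_vec (length I) a b e -> test_vec (length I) a b f ->
  RInt (fun z => sumR (length I) (fun p => e p z * JJvec m P I f p z)) a b =
  - RInt (fun z => sumR (length I) (fun p => JJvec m P I e p z * f p z)) a b.
Proof.
  intros Hab HP HIn He Hf. set (l := length I).
  assert (Hes : forall p, (p < l)%nat -> smooth1 (e p)) by (intros; apply He; auto).
  assert (Hfs : forall p, (p < l)%nat -> smooth1 (f p)) by (intros; apply Hf; auto).
  set (T := fun p q j z => P j (ip I p) (ip I q) * (-1) ^ (jp I q) * (e p z * Derive_n (f q) (jp I p + j + jp I q) z)).
  set (U := fun p q j z => P j (ip I q) (ip I p) * (-1) ^ (jp I p) * (Derive_n (e p) (jp I p + j + jp I q) z * f q z)).
  assert (ST : forall p q j, (p < l)%nat -> (q < l)%nat -> smooth1 (T p q j)).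
  { intros. unfold T. apply smooth1_scal. apply smooth1_mult; auto. apply smooth1_Derive_n; auto. }
  assert (SU : forall p q j, (p < l)%nat -> (q < l)%nat -> smooth1 (U p q j)).
  { intros. unfold U. apply smooth1_scal. apply smooth1_mult; auto. apply smooth1_Derive_n; auto. }
  assert (EL : forall z, sumR l (fun p => e p z * JJvec m P I f p z) =
                 sumR l (fun p => sumR l (fun q => sumR (S m) (fun j => T p q j z)))).
  { intro z. apply sumR_ext. intros p Hp. unfold JJvec. fold l. rewrite sumR_scal. apply sumR_ext. intros q Hq.
    rewrite JJop_expand by auto. rewrite sumR_scal. apply sumR_ext. intros j _. unfold T. ring. }
  assert (ER : forall z, sumR l (fun p => JJvec m P I e p z * f p z) =
                 sumR l (fun p => sumR l (fun q => sumR (S m) (fun j => U p q j z)))).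
  { intro z. rewrite (sumR_ext l _ (fun q => sumR l (fun p => sumR (S m) (fun j => U p q j z)))).
    apply sumR_swap.
    intros q Hq. unfold JJvec. fold l. rewrite sumR_scal_r. apply sumR_ext. intros p Hp.
    rewrite JJop_expand by auto. rewrite sumR_scal_r. apply sumR_ext. intros j _. unfold U.
    replace (jp I q + j + jp I p)%nat with (jp I p + j + jp I q)%nat by lia. ring. }
  rewrite (RInt_ext_R _ _ a b EL), (RInt_ext_R _ _ a b ER).
  rewrite (RInt_sumR_s l (fun p z => sumR l (fun q => sumR (S m) (fun j => T p q j z)))).
  2: { intros p Hp. apply (smooth1_sumR l (fun q z => sumR (S m) (fun j => T p q j z))). intros q Hq.
       apply (smooth1_sumR (S m) (fun j z => T p q j z)). intros; apply ST; auto. }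
  rewrite (RInt_sumR_s l (fun p z => sumR l (fun q => sumR (S m) (fun j => U p q j z)))).
  2: { intros p Hp. apply (smooth1_sumR l (fun q z => sumR (S m) (fun j => U p q j z))). intros q Hq.
       apply (smooth1_sumR (S m) (fun j z => U p q j z)). intros; apply SU; auto. }
  rewrite <- sumR_opp. apply sumR_ext. intros p Hp.
  rewrite (RInt_sumR_s l (fun q z => sumR (S m) (fun j => T p q j z))).
  2: { intros q Hq. apply (smooth1_sumR (S m) (fun j z => T p q j z)). intros; apply ST; auto. }
  rewrite (RInt_sumR_s l (fun q z => sumR (S m) (fun j => U p q j z))).
  2: { intros q Hq. apply (smooth1_sumR (S m) (fun j z => U p q j z)). intros; apply SU; auto. }
  rewrite <- sumR_opp. apply sumR_ext. intros q Hq.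
  rewrite (RInt_sumR_s (S m) (fun j z => T p q j z)) by (intros; apply ST; auto).
  rewrite (RInt_sumR_s (S m) (fun j z => U p q j z)) by (intros; apply SU; auto).
  rewrite <- sumR_opp. apply sumR_ext. intros j Hj.
  unfold T, U.
  rewrite (RInt_scal_R (fun z => e p z * Derive_n (f q) (jp I p + j + jp I q) z)).
  2: apply exRInt_cont; intro; apply smooth1_cont; apply smooth1_mult; auto; apply smooth1_Derive_n; auto.
  rewrite (RInt_scal_R (fun z => Derive_n (e p) (jp I p + j + jp I q) z * f q z)).
  2: apply exRInt_cont; intro; apply smooth1_cont; apply smooth1_mult; auto; apply smooth1_Derive_n; auto.
  rewrite (parts a b (f q) Hab (Hf q Hq) (jp I p + j + jp I q) (e p) (Hes p Hp)).
  set (Iv := RInt (fun z => Derive_n (e p) (jp I p + j + jp I q) z * f q z) a b).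
  assert (HPs : P j (ip I p) (ip I q) = (-1) ^ (S j) * P j (ip I q) (ip I p)).
  { apply HP. lia. apply HIn; auto. apply HIn; auto. }
  pose proof (sign_lemma _ _ j (jp I p) (jp I q) HPs) as Hs.
  transitivity ((P j (ip I p) (ip I q) * (-1) ^ jp I q * (-1) ^ (jp I p + j + jp I q)) * Iv). ring.
  rewrite Hs. ring.
Qed.

Theorem proposition3 (a b : R) (n m md : nat) (P : nat -> nat -> nat -> R)
    (I : list (nat * nat)) (H : (nat -> R) -> R) (x g : nat -> R -> R -> R) (t0 t1 : R) :
  a < b ->
  (* P_j = (-1)^(j+1) P_j^T for j in [0:m] *)
  (forall j i k, (j <= m)%nat -> (i < n)%nat -> (k < n)%nat ->
      P j i k = (-1) ^ (S j) * P j k i) ->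
  (* I: distinct pairs in [0:n-1] x [0:md], ordered by nondecreasing j *)
  NoDup I ->
  (forall pr, In pr I -> (fst pr < n)%nat /\ (snd pr <= md)%nat) ->
  (forall p q, (p <= q)%nat -> (q < length I)%nat -> (jp I p <= jp I q)%nat) ->
  (* H : R^l -> R smooth *)
  depends_on_first (length I) H -> smoothN (length I) H ->
  (* x smooth, solves dx/dt = J (delta_x H(x)) with variational derivative g *)
  (forall i, (i < n)%nat -> smooth2 (x i)) ->
  (forall i, (i < n)%nat -> smooth2 (g i)) ->
  (forall t, t0 < t < t1 ->
      is_var_deriv n a b (Hfun a b I H) (fun i => x i t) (fun i => g i t) /\
      (forall i z, (i < n)%nat -> a <= z <= b ->
         Derive (fun t' => x i t' z) t = sumR n (fun k => Jop m P i k (g k t) z))) ->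
  (* conclusion: xbar solves d/dt xbar = JJ delta_xbar Hbar(xbar) ... *)
  (forall t, t0 < t < t1 ->
     exists gb : nat -> R -> R,
       is_var_deriv (length I) a b (Hbar a b H) (fun p => xbar I x p t) gb /\
       (forall p, (p < length I)%nat -> smooth1 (gb p)) /\
       (forall p z, (p < length I)%nat -> a <= z <= b ->
          Derive (fun t' => xbar I x p t' z) t = JJvec m P I gb p z)) /\
  (* ... and JJ is formally skew-adjoint *)
  (forall e f, test_vec (length I) a b e -> test_vec (length I) a b f ->
     RInt (fun z => sumR (length I) (fun p => e p z * JJvec m P I f p z)) a b =
     - RInt (fun z => sumR (length I) (fun p => JJvec m P I e p z * f p z)) a b).
Proof.
  intros Hab HP HND HI Hord Hd Hs Hx Hg Hsol.
  assert (HIn : forall p, (p < length I)%nat -> (ip I p < n)%nat).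
  { intros p Hp. unfold ip. apply (HI (nth p I (0, 0)%nat)). apply nth_In. auto. }
  split.
  - intros t Ht. destruct (Hsol t Ht) as [Hvd Hdt].
    exists (gbf H I x t). split; [|split].
    + intros eta Heta. unfold Hbar.
      exact (vd (length I) H a b (fun p => xbar I x p t) eta Hd Hs
               (fun q Hq z => smooth1_cont _ (xbar_smooth n I x t q (HIn q Hq) Hx) z)
               (fun q Hq z => smooth1_cont _ (proj1 (Heta q Hq)) z)).
    + intros p Hp. apply (gbf_smooth n); auto.
    + intros p z Hp Hz. apply (main_eq a b n m P I H x g t p z); auto.
  - intros e f He Hf. apply (skew a b n m P I e f); auto.
Qed.
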